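(* Let $A(t)$ be an $n\times n$ tridiagonal matrix-valued function on $\mathbb{R}$ with bounded, uniformly continuous entries and $a_{i,i+1}(t)\ge\varepsilon_0$, $a_{i+1,i}(t)\ge\varepsilon_0$ for all $t$, $1\le i\le n-1$, for some $\varepsilon_0>0$. Let $x(t)$ be a nontrivial solution of $\dot x=A(t)x$. Suppose there is a sequence $t_k\to\infty$ (or $t_k\to-\infty$) such that $x(t_k)\to x_*\ne 0$ and $A_{t_k}(t):=A(t+t_k)$ converges to a matrix function $A_*(t)$ uniformly on every compact interval of $\mathbb{R}$. Then the solution $x_*(t)$ of $\dot x=A_*(t)x$ with $x_*(0)=x_*$ satisfies $x_*(t)\in\Lambda$ for all $t\in\mathbb{R}$ and $\sigma(x_*(t))$ is constant in $t\in\mathbb{R}$.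
   Context: $\Lambda=\{x\in\mathbb{R}^n: x_1\ne0,\ x_n\ne 0,\ \text{and if } x_i=0 \text{ for some } 2\le i\le n-1 \text{ then } x_{i-1}x_{i+1}<0\}$. The function $\sigma:\Lambda\to\{0,1,\dots,n-1\}$ is $\sigma(x)=\#\{i: x_i=0 \text{ or } x_ix_{i+1}<0\}$. *)

(* Defs.v *)
(* classical reals. Vectors in R^n are functions nat -> R
   (only indices 0..n-1 matter); n x n matrices are nat -> nat -> R. *)
From Stdlib Require Import Reals Lra Lia.
Open Scope R_scope.

Fixpoint sumR (n : nat) (f : nat -> R) : R :=
  match n with
  | O => 0
  | S m => sumR m f + f m
  end.

Definition matvec (n : nat) (M : nat -> nat -> R) (v : nat -> R) (i : nat) : R :=
  sumR n (fun j => M i j * v j).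

Definition is_solution (n : nat) (A : R -> nat -> nat -> R) (x : R -> nat -> R) : Prop :=
  forall (t : R) (i : nat), (i < n)%nat ->
    derivable_pt_lim (fun s => x s i) t (matvec n (A t) (x t) i).

(* Lambda, with 0-based indices 0..n-1 *)
Definition in_Lambda (n : nat) (x : nat -> R) : Prop :=
  x 0%nat <> 0 /\ x (n - 1)%nat <> 0 /\
  (forall i : nat, (1 <= i)%nat -> (i + 1 < n)%nat ->
     x i = 0 -> x (i - 1)%nat * x (i + 1)%nat < 0).

Fixpoint sigma_aux (x : nat -> R) (k : nat) : nat :=
  match k with
  | O => O
  | S m => (sigma_aux x m +
            (if Req_EM_T (x m) 0 then 1
             else if Rlt_dec (x m * x (S m)) 0 then 1 else 0))%nat
  end.

(* sigma(x) = #{ i in 1..n : x_i = 0 or x_i x_{i+1} < 0 }; the index i = n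
   (0-based n-1) has no successor and x_n <> 0 on Lambda, so only
   0-based i < n-1 are counted. *)
Definition sigma_var (n : nat) (x : nat -> R) : nat := sigma_aux x (n - 1).

(* Main.v *)
Require Import Defs.
From Stdlib Require Import Reals Lra Lia Classical Bool Arith FunctionalExtensionality.
Open Scope R_scope.

Definition sg (b : bool) : R := if b then 1 else -1.

Definition compat (n : nat) (c : nat -> bool) (v : nat -> R) : Prop :=
  forall j, (j < n)%nat -> 0 <= sg (c j) * v j.

Fixpoint cnt (c : nat -> bool) (i k : nat) : nat :=
  match k with
  | O => O
  | S k' => ((if Bool.eqb (c i) (c (S i)) then 0 else 1) + cnt c (S i) k')%nat
  end.

Definition chg (n : nat) (c : nat -> bool) : nat := cnt c 0 (n - 1).

Definition Alt (n : nat) (v : nat -> R) (k : nat) : Prop :=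
  forall c, compat n c v -> (k <= chg n c)%nat.
Definition WAlt (n : nat) (v : nat -> R) (k : nat) : Prop :=
  exists c, compat n c v /\ (k <= chg n c)%nat.

Definition can (r : R) : bool := if Rle_dec 0 r then true else false.
Definition canc (v : nat -> R) : nat -> bool := fun j => can (v j).

Lemma sg_can r : 0 <= sg (can r) * r.
Proof. unfold can, sg; destruct (Rle_dec 0 r); lra. Qed.

Lemma compat_canc n v : compat n (canc v) v.
Proof. intros j _; apply sg_can. Qed.

Lemma Alt_WAlt n v k : Alt n v k -> WAlt n v k.
Proof. intro H; exists (canc v); split; [apply compat_canc| apply H, compat_canc]. Qed.

Lemma cnt_split c i a b : cnt c i (a + b) = (cnt c i a + cnt c (i + a) b)%nat.
Proof.
  revert i; induction a; intro i; simpl.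
  - rewrite Nat.add_0_r; reflexivity.
  - rewrite IHa. replace (S i + a)%nat with (i + S a)%nat by lia. lia.
Qed.

Lemma cnt_ext c c' i k : (forall j, (i <= j <= i + k)%nat -> c j = c' j) ->
  cnt c i k = cnt c' i k.
Proof.
  revert i; induction k; intros i H; simpl; auto.
  rewrite (H i) by lia. rewrite (H (S i)) by lia. rewrite (IHk (S i)); auto.
  intros j Hj; apply H; lia.
Qed.

Lemma cnt_le c i k : (cnt c i k <= k)%nat.
Proof. revert i; induction k; intro i; simpl; auto. specialize (IHk (S i)).
  destruct (Bool.eqb _ _); lia. Qed.

Lemma cnt_one c i : cnt c i 1 = (if Bool.eqb (c i) (c (S i)) then 0 else 1)%nat.
Proof. simpl. lia. Qed.

Lemma compat_ext n c v v' : (forall j, (j < n)%nat -> v j = v' j) ->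
  compat n c v -> compat n c v'.
Proof. intros E H j Hj; rewrite <- E by auto; auto. Qed.

Lemma compat_ext_c n c c' v : (forall j, (j < n)%nat -> c j = c' j) ->
  compat n c v -> compat n c' v.
Proof. intros E H j Hj; rewrite <- E by auto; auto. Qed.

Lemma chg_ext n c c' : (forall j, (j < n)%nat -> c j = c' j) -> chg n c = chg n c'.
Proof.
  intro E; unfold chg. destruct n. reflexivity.
  apply cnt_ext. intros j Hj; apply E; lia.
Qed.

Lemma Alt_ext n v v' k : (forall j, (j < n)%nat -> v j = v' j) -> Alt n v k -> Alt n v' k.
Proof. intros E H c Hc; apply H; eapply compat_ext; [|exact Hc]; intros; symmetry; auto. Qed.

Lemma WAlt_ext n v v' k : (forall j, (j < n)%nat -> v j = v' j) -> WAlt n v k -> WAlt n v' k.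
Proof. intros E [c [Hc Hk]]; exists c; split; auto; eapply compat_ext; eauto. Qed.

Definition Dc (c : nat -> bool) : nat -> bool := fun j => xorb (c j) (Nat.odd j).
Definition Dv (v : nat -> R) : nat -> R := fun j => (-1) ^ j * v j.

Lemma pow_m1_sq j : (-1) ^ j * (-1) ^ j = 1.
Proof. rewrite <- Rpow_mult_distr. replace (-1 * -1) with 1 by lra. apply pow1. Qed.

Lemma sg_Dc c j : sg (Dc c j) = sg (c j) * (-1) ^ j.
Proof.
  unfold Dc, sg. induction j.
  - simpl. destruct (c 0%nat); simpl; lra.
  - rewrite Nat.odd_succ, <- Nat.negb_odd. simpl.
    destruct (c (S j)), (Nat.odd j); simpl in *.
    + destruct (c j); simpl in IHj; nra.
    + destruct (c j); simpl in IHj; nra.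
    + destruct (c j); simpl in IHj; nra.
    + destruct (c j); simpl in IHj; nra.
Qed.

Lemma compat_D n c v : compat n c (Dv v) <-> compat n (Dc c) v.
Proof.
  split; intros H j Hj; specialize (H j Hj); unfold Dv in *; rewrite ?sg_Dc in *.
  - replace (sg (c j) * (-1) ^ j * v j) with (sg (c j) * ((-1) ^ j * v j)) by ring; auto.
  - replace (sg (c j) * ((-1) ^ j * v j)) with (sg (c j) * (-1) ^ j * v j) by ring; auto.
Qed.

Lemma cnt_D c i k : (cnt (Dc c) i k + cnt c i k)%nat = k.
Proof.
  revert i; induction k; intro i; simpl; auto.
  specialize (IHk (S i)). unfold Dc at 1 2. rewrite Nat.odd_succ, <- Nat.negb_odd.
  destruct (c i), (c (S i)), (Nat.odd i); simpl; lia.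
Qed.

Lemma chg_D n c : (chg n (Dc c) + chg n c)%nat = (n - 1)%nat.
Proof. apply cnt_D. Qed.

Lemma chg_le n c : (chg n c <= n - 1)%nat.
Proof. apply cnt_le. Qed.

Lemma DcDc c j : Dc (Dc c) j = c j.
Proof. unfold Dc. destruct (c j), (Nat.odd j); reflexivity. Qed.

Lemma DvDv v j : Dv (Dv v) j = v j.
Proof. unfold Dv. rewrite <- Rmult_assoc, pow_m1_sq. ring. Qed.

Lemma WAlt_D_notAlt n v k : (1 <= n)%nat -> WAlt n (Dv v) k -> ~ Alt n v (n - k).
Proof.
  intros Hn [c [Hc Hk]] HA. apply compat_D in Hc. specialize (HA _ Hc).
  pose proof (chg_D n c). pose proof (chg_le n c). lia.
Qed.

Lemma notAlt_WAlt_D n v k : ~ Alt n v (n - k) -> WAlt n (Dv v) k.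
Proof.
  intro H. unfold Alt in H.
  apply not_all_ex_not in H as [c Hc].
  apply imply_to_and in Hc as [Hc Hk].
  exists (Dc c). split.
  - apply compat_D. eapply compat_ext_c; [|exact Hc]. intros; symmetry; apply DcDc.
  - pose proof (chg_D n c). lia.
Qed.

Lemma WAlt_notAlt_D n w k : (1 <= n)%nat -> WAlt n w k -> ~ Alt n (Dv w) (n - k).
Proof.
  intros Hn H. apply WAlt_D_notAlt; auto. eapply WAlt_ext; [|exact H]. intros; symmetry; apply DvDv.
Qed.

Lemma notWAlt_D_Alt n w k : (k <= n)%nat -> ~ WAlt n (Dv w) (n - k) -> Alt n w k.
Proof.
  intros Hk H. apply NNPP; intro H'. apply H. apply notAlt_WAlt_D.
  replace (n - (n - k))%nat with k by lia. exact H'.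
Qed.

Fixpoint mnabs (v : nat -> R) (k : nat) : R :=
  match k with
  | O => 1
  | S k' => Rmin (mnabs v k') (if Req_EM_T (v k') 0 then 1 else Rabs (v k'))
  end.

Lemma mnabs_pos v k : 0 < mnabs v k.
Proof.
  induction k; simpl. lra. apply Rmin_glb_lt; auto.
  destruct (Req_EM_T (v k) 0). lra. apply Rabs_pos_lt; auto.
Qed.

Lemma mnabs_le v k j : (j < k)%nat -> v j <> 0 -> mnabs v k <= Rabs (v j).
Proof.
  induction k; intros Hj Hv. lia. simpl.
  destruct (Nat.eq_dec j k). subst. destruct (Req_EM_T (v k) 0). contradiction.
  apply Rmin_r.
  eapply Rle_trans. apply Rmin_l. apply IHk; auto; lia.
Qed.

Lemma sg_cases b : sg b = 1 \/ sg b = -1.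
Proof. destruct b; simpl; auto. Qed.

Lemma Alt_open n v k : Alt n v k -> exists eta, 0 < eta /\
  forall w, (forall j, (j < n)%nat -> Rabs (w j - v j) < eta) -> Alt n w k.
Proof.
  intro H. exists (mnabs v n). split. apply mnabs_pos.
  intros w Hw c Hc. apply H. intros j Hj.
  destruct (Req_EM_T (v j) 0) as [E|E]. rewrite E; lra.
  pose proof (mnabs_le v n j Hj E). specialize (Hw j Hj). specialize (Hc j Hj).
  destruct (sg_cases (c j)) as [S|S]; rewrite S in *;
  revert Hw H0; unfold Rabs; repeat destruct Rcase_abs; intros; nra.
Qed.

Definition upd (c : nat -> bool) (n : nat) (b : bool) : nat -> bool :=
  fun j => if Nat.eqb j n then b else c j.

Lemma pigeon n : forall (R0 : nat -> (nat -> bool) -> Prop),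
  (forall m c c', (forall j, (j < n)%nat -> c j = c' j) -> R0 m c -> R0 m c') ->
  (forall M, exists m, (M <= m)%nat /\ exists c, R0 m c) ->
  exists c, forall M, exists m, (M <= m)%nat /\ R0 m c.
Proof.
  induction n; intros R0 Hext H.
  - exists (fun _ => true). intro M. destruct (H M) as [m [Hm [c Hc]]].
    exists m; split; auto. eapply Hext; [|exact Hc]. intros; lia.
  - set (R1 := fun m c => R0 m (upd c n true)).
    set (R2 := fun m c => R0 m (upd c n false)).
    assert (E1 : forall m c c', (forall j, (j < n)%nat -> c j = c' j) -> R1 m c -> R1 m c').
    { intros m c c' E; unfold R1; apply Hext. intros j Hj; unfold upd.
      destruct (Nat.eqb_spec j n); auto. apply E; lia. }
    assert (E2 : forall m c c', (forall j, (j < n)%nat -> c j = c' j) -> R2 m c -> R2 m c').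
    { intros m c c' E; unfold R2; apply Hext. intros j Hj; unfold upd.
      destruct (Nat.eqb_spec j n); auto. apply E; lia. }
    assert (Hsplit : forall m c, R0 m c -> R1 m c \/ R2 m c).
    { intros m c Hc. destruct (c n) eqn:Ecn; [left|right]; (eapply Hext; [|exact Hc]);
      intros j Hj; unfold upd; destruct (Nat.eqb_spec j n); subst; auto. }
    destruct (classic (forall M, exists m, (M <= m)%nat /\ exists c, R1 m c)) as [F|F].
    + destruct (IHn R1 E1 F) as [c Hc]. exists (upd c n true). exact Hc.
    + apply not_all_ex_not in F as [M0 HM0].
      assert (F2 : forall M, exists m, (M <= m)%nat /\ exists c, R2 m c).
      { intro M. destruct (H (Nat.max M M0)) as [m [Hm [c Hc]]].
        exists m. split. lia. destruct (Hsplit m c Hc) as [h|h].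
        - exfalso. apply HM0. exists m. split. lia. exists c; auto.
        - exists c; auto. }
      destruct (IHn R2 E2 F2) as [c Hc]. exists (upd c n false). exact Hc.
Qed.

Lemma WAlt_closed n (y : nat -> nat -> R) v k :
  (forall M, exists m, (M <= m)%nat /\ WAlt n (y m) k) ->
  (forall j, (j < n)%nat -> Un_cv (fun m => y m j) (v j)) ->
  WAlt n v k.
Proof.
  intros H Hcv.
  destruct (pigeon n (fun m c => compat n c (y m) /\ (k <= chg n c)%nat)) as [c Hc].
  - intros m c c' E [h1 h2]. split. eapply compat_ext_c; eauto.
    rewrite <- (chg_ext n c c'); auto.
  - intro M. destruct (H M) as [m [Hm [c Hc]]]. exists m; split; auto. exists c; auto.
  - exists c. split.
    + intros j Hj. apply Rnot_lt_le. intro Hneg.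
      destruct (Hcv j Hj (- (sg (c j) * v j))) as [N HN]. lra.
      destruct (Hc N) as [m [Hm [Hcm _]]]. specialize (Hcm j Hj). specialize (HN m Hm).
      unfold R_dist in HN.
      destruct (sg_cases (c j)) as [S|S]; rewrite S in *;
      revert HN; unfold Rabs; repeat destruct Rcase_abs; intros; nra.
    + destruct (Hc 0%nat) as [m [_ [_ Hk]]]. exact Hk.
Qed.

Lemma chg_unique n v : (forall k, WAlt n v k -> Alt n v k) ->
  forall c1 c2, compat n c1 v -> compat n c2 v -> chg n c1 = chg n c2.
Proof.
  intros H c1 c2 H1 H2.
  assert (A1 : (chg n c1 <= chg n c2)%nat).
  { apply (H (chg n c1)); auto. exists c1; auto. }
  assert (A2 : (chg n c2 <= chg n c1)%nat).
  { apply (H (chg n c2)); auto. exists c2; auto. }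
  lia.
Qed.

Lemma compat_upd0 n c v i b : v i = 0 -> compat n c v -> compat n (upd c i b) v.
Proof.
  intros Hv H j Hj. unfold upd. destruct (Nat.eqb_spec j i). subst. rewrite Hv; lra. auto.
Qed.

Lemma eqb_sym' b c : Bool.eqb b c = Bool.eqb c b.
Proof. destruct b, c; reflexivity. Qed.

Lemma eqb_neg b c : Bool.eqb (negb b) c = negb (Bool.eqb b c).
Proof. destruct b, c; reflexivity. Qed.

Lemma Lambda_of n v : (exists i, (i < n)%nat /\ v i <> 0) ->
  (forall c1 c2, compat n c1 v -> compat n c2 v -> chg n c1 = chg n c2) ->
  in_Lambda n v.
Proof.
  intros [i0 [Hi0 Hv0]] U.
  set (c := canc v). assert (Hc : compat n c v) by apply compat_canc.
  assert (L0 : v 0%nat <> 0).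
  { intro E. destruct (Nat.eq_dec n 1). subst. replace i0 with 0%nat in Hv0 by lia. auto.
    set (c' := upd c 0 (negb (c 0%nat))).
    assert (Hc' : compat n c' v) by (apply compat_upd0; auto).
    specialize (U _ _ Hc Hc'). unfold chg in U.
    replace (n - 1)%nat with (1 + (n - 2))%nat in U by lia.
    rewrite !cnt_split, !cnt_one in U.
    rewrite (cnt_ext c' c) in U. unfold c' in U. unfold upd in U at 1 2. simpl in U.
    rewrite eqb_neg in U. destruct (Bool.eqb (c 0%nat) (c 1%nat)); simpl in U; lia.
    intros j Hj. unfold c', upd. destruct (Nat.eqb_spec j 0); auto; lia. }
  assert (L1 : v (n - 1)%nat <> 0).
  { intro E. destruct (Nat.eq_dec n 1). subst. simpl in E. auto.
    set (c' := upd c (n-1) (negb (c (n-1)%nat))).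
    assert (Hc' : compat n c' v) by (apply compat_upd0; auto).
    specialize (U _ _ Hc Hc'). unfold chg in U.
    replace (n - 1)%nat with ((n - 2) + 1)%nat in U by lia.
    rewrite !cnt_split, !cnt_one in U.
    rewrite (cnt_ext c' c 0) in U.
    replace (S (0 + (n - 2))) with (n - 1)%nat in U by lia.
    replace (0 + (n - 2))%nat with (n - 2)%nat in U by lia.
    unfold c' in U. unfold upd in U.
    rewrite (proj2 (Nat.eqb_neq (n-2) (n-1))) in U by lia.
    rewrite Nat.eqb_refl in U.
    rewrite (eqb_sym' (c (n-2)%nat) (negb _)), eqb_neg, (eqb_sym' (c (n-1)%nat)) in U.
    destruct (Bool.eqb (c (n-2)%nat) (c (n-1)%nat)); simpl in U; lia.
    intros j Hj. unfold c', upd. destruct (Nat.eqb_spec j (n-1)); auto; lia. }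
  split; [|split]; auto.
  intros i Hi1 Hi2 Ei. apply Rnot_le_lt. intro Hge.
  assert (Ex : exists c2, compat n c2 v /\ c2 (i - 1)%nat = c2 (i + 1)%nat).
  { destruct (Req_EM_T (v (i-1)%nat) 0) as [Z|Z].
    - exists (upd c (i-1) (c (i+1)%nat)). split. apply compat_upd0; auto.
      unfold upd. rewrite Nat.eqb_refl. rewrite (proj2 (Nat.eqb_neq (i+1) (i-1))) by lia. auto.
    - destruct (Req_EM_T (v (i+1)%nat) 0) as [Z'|Z'].
      + exists (upd c (i+1) (c (i-1)%nat)). split. apply compat_upd0; auto.
        unfold upd. rewrite Nat.eqb_refl. rewrite (proj2 (Nat.eqb_neq (i-1) (i+1))) by lia. auto.
      + exists c. split; auto. unfold c, canc, can.
        destruct (Rle_dec 0 (v (i-1)%nat)), (Rle_dec 0 (v (i+1)%nat)); auto; exfalso.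
        * assert (0 < v (i-1)%nat) by lra. assert (v (i+1)%nat < 0) by lra. nra.
        * assert (0 < v (i+1)%nat) by lra. assert (v (i-1)%nat < 0) by lra. nra. }
  destruct Ex as [c2 [Hc2 Heq]].
  set (c3 := upd c2 i (negb (c2 i))).
  assert (Hc3 : compat n c3 v) by (apply compat_upd0; auto).
  specialize (U _ _ Hc2 Hc3). unfold chg in U.
  replace (n - 1)%nat with ((i - 1) + (2 + (n - 2 - i)))%nat in U by lia.
  rewrite !cnt_split in U.
  rewrite (cnt_ext c3 c2 0 (i-1)) in U.
  rewrite (cnt_ext c3 c2 (0 + (i - 1) + 2) (n-2-i)) in U.
  replace (i - 1 + 2)%nat with (S i) in U by lia.
  replace (0 + (i - 1))%nat with (i - 1)%nat in U by lia.
  simpl in U. replace (S (i - 1)) with i in U by lia.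
  unfold c3, upd in U. rewrite Nat.eqb_refl in U.
  rewrite (proj2 (Nat.eqb_neq (i-1) i)) in U by lia.
  rewrite (proj2 (Nat.eqb_neq (S i) i)) in U by lia.
  replace (S i) with (i + 1)%nat in U by lia. rewrite <- Heq in U.
  rewrite (eqb_sym' (c2 (i-1)%nat) (negb _)), eqb_neg in U.
  rewrite (eqb_sym' (c2 (i-1)%nat) (c2 i)) in U.
  destruct (Bool.eqb (c2 i) (c2 (i-1)%nat)); simpl in U; lia.
  all: intros j Hj; unfold c3, upd; destruct (Nat.eqb_spec j i); auto; lia.
Qed.

Definition cL (v : nat -> R) : nat -> bool :=
  fun j => if Req_EM_T (v j) 0 then can (v (j - 1)%nat) else can (v j).

Lemma can_eqb r r' : r <> 0 -> r' <> 0 -> (Bool.eqb (can r) (can r') = true <-> 0 < r * r').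
Proof.
  intros H H'. unfold can. destruct (Rle_dec 0 r), (Rle_dec 0 r'); simpl; split; intro;
  try discriminate; auto.
  - assert (0 < r) by lra. assert (0 < r') by lra. nra.
  - assert (0 < r) by lra. assert (r' < 0) by lra. nra.
  - assert (r < 0) by lra. assert (0 < r') by lra. nra.
  - assert (r < 0) by lra. assert (r' < 0) by lra. nra.
Qed.

Lemma Lambda_sigma n v : in_Lambda n v -> compat n (cL v) v /\ chg n (cL v) = sigma_var n v.
Proof.
  intros [H0 [H1 H2]]. split.
  - intros j Hj. unfold cL. destruct (Req_EM_T (v j) 0) as [E|E]. rewrite E; lra. apply sg_can.
  - unfold chg, sigma_var.
    assert (forall k, (k <= n - 1)%nat -> cnt (cL v) 0 k = sigma_aux v k); [|auto].
    induction k; intro Hk. reflexivity.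
    replace (S k) with (k + 1)%nat by lia. rewrite cnt_split, cnt_one.
    replace (k + 1)%nat with (S k) by lia. simpl. rewrite IHk by lia. f_equal.
    unfold cL.
    destruct (Req_EM_T (v k) 0) as [Ek|Ek].
    + assert (k <> 0%nat) by (intro; subst; auto).
      assert (Hm := H2 k ltac:(lia) ltac:(lia) Ek). replace (k+1)%nat with (S k) in Hm by lia.
      destruct (Req_EM_T (v (S k)) 0) as [E2|E2]. rewrite E2 in Hm; lra.
      destruct (Bool.eqb (can (v (k-1)%nat)) (can (v (S k)))) eqn:B; auto.
      apply can_eqb in B; [lra| |auto]. intro Z; rewrite Z in Hm; lra.
    + destruct (Req_EM_T (v (S k)) 0) as [E2|E2].
      * replace (S k - 1)%nat with k by lia. rewrite Bool.eqb_reflx.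
        destruct (Rlt_dec (v k * v (S k)) 0); auto. rewrite E2 in r; lra.
      * destruct (Bool.eqb (can (v k)) (can (v (S k)))) eqn:B.
        -- apply can_eqb in B; auto. destruct (Rlt_dec (v k * v (S k)) 0); auto; lra.
        -- destruct (Rlt_dec (v k * v (S k)) 0); auto. exfalso.
           assert (0 < v k * v (S k)) by (assert (v k * v (S k) <> 0) by (apply Rmult_integral_contrapositive; auto); lra).
           apply (can_eqb _ _ Ek E2) in H. rewrite H in B; discriminate.
Qed.

Fixpoint Lp (u : nat -> R) (i : nat) : nat :=
  match i with O => O | S i' => if Req_EM_T (u (S i')) 0 then Lp u i' else S i' end.
Fixpoint Rf (u : nat -> R) (f i : nat) : nat :=
  match f with O => i | S f' => if Req_EM_T (u i) 0 then Rf u f' (S i) else i end.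
Definition Rp n u i := Rf u (n - i) i.
Definition hasL u i : bool := if Req_EM_T (u (Lp u i)) 0 then false else true.
Definition DL n u i : nat := if hasL u i then (i - Lp u i)%nat else n.
Definition DR n u i : nat := if (Rp n u i <? n)%nat then (Rp n u i - i)%nat else n.

Lemma Lp_le u i : (Lp u i <= i)%nat.
Proof. induction i; simpl; auto. destruct Req_EM_T; lia. Qed.
Lemma Lp_nz u i : u i <> 0 -> Lp u i = i.
Proof. destruct i; simpl; auto. destruct Req_EM_T; auto; contradiction. Qed.
Lemma Lp_z u i : u (S i) = 0 -> Lp u (S i) = Lp u i.
Proof. simpl. destruct Req_EM_T; auto; contradiction. Qed.
Lemma Lp_ge u i j : (j <= i)%nat -> u j <> 0 -> (j <= Lp u i)%nat.
Proof.
  induction i; intros Hj Hu. replace j with 0%nat by lia. simpl; lia.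
  destruct (Nat.eq_dec j (S i)). subst. rewrite Lp_nz; auto.
  simpl. destruct Req_EM_T. apply IHi; auto; lia. lia.
Qed.
Lemma Lp_mono u i i' : (i <= i')%nat -> (Lp u i <= Lp u i')%nat.
Proof.
  intro H. induction H. lia. simpl. destruct Req_EM_T. auto. pose proof (Lp_le u m); lia.
Qed.
Lemma notHasL u i : u (Lp u i) = 0 -> forall j, (j <= i)%nat -> u j = 0.
Proof.
  intros H j Hj. apply NNPP; intro Hn. pose proof (Lp_ge u i j Hj Hn).
  pose proof (Lp_le u i).
  revert H H0 H1. clear Hj. revert j Hn. induction i; intros j Hn H H0 H1.
  simpl in *. replace j with 0%nat in * by lia. contradiction.
  simpl in H, H0. destruct Req_EM_T in H, H0.
  - destruct (Nat.eq_dec j (S i)). subst. contradiction.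
    eapply IHi; eauto. apply Lp_le.
  - contradiction.
Qed.
Lemma Lp_zeros u i i' : (i <= i')%nat -> (forall j, (i < j <= i')%nat -> u j = 0) ->
  Lp u i' = Lp u i.
Proof.
  intros H. induction H; intro Z; auto. rewrite Lp_z. apply IHle. intros; apply Z; lia.
  apply Z; lia.
Qed.

Lemma Rf_ge u f i : (i <= Rf u f i)%nat.
Proof. revert i; induction f; intro i; simpl; auto. destruct Req_EM_T; auto. specialize (IHf (S i)); lia. Qed.
Lemma Rf_le u f i : (Rf u f i <= i + f)%nat.
Proof. revert i; induction f; intro i; simpl; try lia. destruct Req_EM_T; try lia. specialize (IHf (S i)); lia. Qed.
Lemma Rf_lt_nz u f i : (Rf u f i < i + f)%nat -> u (Rf u f i) <> 0.
Proof.
  revert i; induction f; intros i H; simpl in *. lia.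
  destruct Req_EM_T; auto. apply IHf. lia.
Qed.
Lemma Rf_zeros u f i j : (i <= j < Rf u f i)%nat -> u j = 0.
Proof.
  revert i; induction f; intros i H; simpl in *. lia.
  destruct Req_EM_T. destruct (Nat.eq_dec i j). subst; auto. apply (IHf (S i)); lia. lia.
Qed.
Lemma Rf_first u f i j : (i <= j < i + f)%nat -> u j <> 0 -> (Rf u f i <= j)%nat.
Proof.
  revert i; induction f; intros i H Hu; simpl in *. lia.
  destruct Req_EM_T. destruct (Nat.eq_dec i j). subst; contradiction. apply IHf; auto; lia. lia.
Qed.

Section RpS.
Variable n : nat.
Variable u : nat -> R.
Lemma Rp_ge i : (i <= Rp n u i)%nat.
Proof. apply Rf_ge. Qed.
Lemma Rp_le_n i : (i <= n)%nat -> (Rp n u i <= n)%nat.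
Proof. intro; pose proof (Rf_le u (n - i) i); unfold Rp; lia. Qed.
Lemma Rp_nz_val i : (Rp n u i < n)%nat -> u (Rp n u i) <> 0.
Proof. intro H. apply Rf_lt_nz. unfold Rp in H. pose proof (Rf_ge u (n-i) i). lia. Qed.
Lemma Rp_zeros i j : (i <= j < Rp n u i)%nat -> u j = 0.
Proof. apply Rf_zeros. Qed.
Lemma Rp_first i j : (i <= j < n)%nat -> u j <> 0 -> (Rp n u i <= j)%nat.
Proof. intros; apply Rf_first; auto; lia. Qed.
Lemma Rp_nz i : (i < n)%nat -> u i <> 0 -> Rp n u i = i.
Proof. intros. pose proof (Rp_first i i ltac:(lia) H0). pose proof (Rp_ge i). lia. Qed.
Lemma Rp_mono i i' : (i <= i' <= n)%nat -> (Rp n u i <= Rp n u i')%nat.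
Proof.
  intros H. destruct (le_lt_dec (Rp n u i) i'). pose proof (Rp_ge i'). lia.
  destruct (Nat.lt_ge_cases (Rp n u i') n).
  apply Rp_first. pose proof (Rp_ge i'); lia. apply Rp_nz_val; auto.
  pose proof (Rp_le_n i); lia.
Qed.
Lemma Rp_eq_zeros i i' : (i <= i' <= n)%nat -> (forall j, (i <= j < i')%nat -> u j = 0) ->
  Rp n u i = Rp n u i'.
Proof.
  intros H Z. apply Nat.le_antisymm. apply Rp_mono; auto.
  destruct (Nat.lt_ge_cases (Rp n u i) n).
  - assert (Hi' : (i' <= Rp n u i)%nat).
    { destruct (le_lt_dec i' (Rp n u i)); auto. exfalso. apply (Rp_nz_val i H0).
      apply Z. pose proof (Rp_ge i). lia. }
    apply Rp_first; auto. apply Rp_nz_val; auto.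
  - pose proof (Rp_le_n i' ltac:(lia)); lia.
Qed.
Lemma notHasR i : (n <= Rp n u i)%nat -> forall j, (i <= j < n)%nat -> u j = 0.
Proof. intros H j Hj. apply (Rp_zeros i). lia. Qed.
Lemma Rp_z i : (i < n)%nat -> u i = 0 -> Rp n u i = Rp n u (S i).
Proof. intros; apply Rp_eq_zeros. lia. intros j Hj; replace j with i by lia; auto. Qed.
End RpS.

Lemma DL_le n u i : (i < n)%nat -> (DL n u i <= n)%nat.
Proof. intro; unfold DL; destruct hasL; lia. Qed.
Lemma DR_le n u i : (i <= n)%nat -> (DR n u i <= n)%nat.
Proof. intro; unfold DR; destruct (Nat.ltb_spec (Rp n u i) n); lia. Qed.
Lemma DL_lt_has n u i : (i < n)%nat -> (DL n u i < n)%nat -> u (Lp u i) <> 0 /\ DL n u i = (i - Lp u i)%nat.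
Proof. unfold DL, hasL. destruct Req_EM_T; intros; try lia; auto. Qed.
Lemma DR_lt_has n u i : (DR n u i < n)%nat -> (Rp n u i < n)%nat /\ DR n u i = (Rp n u i - i)%nat.
Proof. unfold DR. destruct (Nat.ltb_spec (Rp n u i) n); intros; try lia; auto. Qed.

Lemma not_both_inf n u i : (exists j, (j < n)%nat /\ u j <> 0) -> (i < n)%nat ->
  (DL n u i < n)%nat \/ (DR n u i < n)%nat.
Proof.
  intros [j [Hj Hu]] Hi. unfold DL, DR, hasL.
  destruct (Req_EM_T (u (Lp u i)) 0) as [E|E]; [|left; pose proof (Lp_le u i); lia].
  destruct (Nat.ltb_spec (Rp n u i) n) as [h|h]; [right; pose proof (Rp_ge n u i); lia|].
  exfalso. destruct (le_lt_dec j i).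
  - apply Hu. eapply notHasL; eauto.
  - apply Hu. eapply notHasR; eauto. lia.
Qed.

Definition F2 n (u v : nat -> R) : Prop := forall i, (i < n)%nat ->
  ((DL n u i < DR n u i)%nat -> 0 < u (Lp u i) * v i) /\
  ((DR n u i < DL n u i)%nat -> 0 < u (Rp n u i) * v i) /\
  (DL n u i = DR n u i -> 0 < u (Lp u i) * u (Rp n u i) -> 0 < u (Lp u i) * v i).

Definition psi n u i b : nat :=
  if Rlt_dec 0 (sg b * u (Lp u i)) then
    (if Nat.leb (DL n u i) (DR n u i) then Lp u i else Rp n u i)
  else Rp n u i.

Lemma sign_from b w a : 0 <= sg b * w -> 0 < a * w -> 0 < sg b * a.
Proof. intros H1 H2. destruct (sg_cases b) as [S|S]; rewrite S in *; nra. Qed.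

Lemma sg_negb b : sg (negb b) = - sg b.
Proof. destruct b; simpl; lra. Qed.

Section Comb.
Variable n : nat.
Variables u v : nat -> R.
Hypothesis Hu : exists j, (j < n)%nat /\ u j <> 0.
Hypothesis HF : F2 n u v.

Lemma P1 i b : (i < n)%nat -> 0 <= sg b * v i ->
  (psi n u i b < n)%nat /\ 0 < sg b * u (psi n u i b).
Proof.
  intros Hi Hv. destruct (HF i Hi) as [F1 [F2' F3]].
  pose proof (DL_le n u i Hi). pose proof (DR_le n u i ltac:(lia)).
  unfold psi. destruct (Rlt_dec 0 (sg b * u (Lp u i))) as [C|C].
  - destruct (Nat.leb_spec (DL n u i) (DR n u i)).
    + split; auto. pose proof (Lp_le u i); lia.
    + destruct (DR_lt_has n u i ltac:(lia)). split; auto.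
      eapply sign_from; eauto.
  - destruct (lt_eq_lt_dec (DL n u i) (DR n u i)) as [[h|h]|h].
    + exfalso. apply C. eapply sign_from; eauto.
    + destruct (not_both_inf n u i Hu Hi) as [h'|h'].
      * rewrite h in h'. destruct (DR_lt_has n u i h') as [h1 h2].
        destruct (DL_lt_has n u i Hi ltac:(lia)) as [h3 h4].
        pose proof (Rp_nz_val n u i h1).
        split; auto.
        destruct (Rlt_dec 0 (u (Lp u i) * u (Rp n u i))) as [P|P].
        -- exfalso. apply C. eapply sign_from; eauto.
        -- destruct (sg_cases b) as [S|S]; rewrite S in *.
           ++ assert (u (Lp u i) < 0) by lra.
              assert (u (Lp u i) * u (Rp n u i) < 0).
              { assert (u (Lp u i) * u (Rp n u i) <> 0) by (apply Rmult_integral_contrapositive; auto). lra. }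
              nra.
           ++ assert (0 < u (Lp u i)) by lra.
              assert (u (Lp u i) * u (Rp n u i) < 0).
              { assert (u (Lp u i) * u (Rp n u i) <> 0) by (apply Rmult_integral_contrapositive; auto). lra. }
              nra.
      * destruct (DR_lt_has n u i h') as [h1 h2].
        destruct (DL_lt_has n u i Hi ltac:(lia)) as [h3 h4].
        pose proof (Rp_nz_val n u i h1).
        split; auto.
        destruct (Rlt_dec 0 (u (Lp u i) * u (Rp n u i))) as [P|P].
        -- exfalso. apply C. eapply sign_from; eauto.
        -- destruct (sg_cases b) as [S|S]; rewrite S in *.
           ++ assert (u (Lp u i) < 0) by lra.
              assert (u (Lp u i) * u (Rp n u i) < 0).
              { assert (u (Lp u i) * u (Rp n u i) <> 0) by (apply Rmult_integral_contrapositive; auto). lra. }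
              nra.
           ++ assert (0 < u (Lp u i)) by lra.
              assert (u (Lp u i) * u (Rp n u i) < 0).
              { assert (u (Lp u i) * u (Rp n u i) <> 0) by (apply Rmult_integral_contrapositive; auto). lra. }
              nra.
    + destruct (DR_lt_has n u i ltac:(lia)). split; auto.
      eapply sign_from; eauto.
Qed.

Lemma psi_cases i b : psi n u i b = Lp u i \/ psi n u i b = Rp n u i.
Proof. unfold psi. destruct Rlt_dec; auto. destruct Nat.leb; auto. Qed.

Lemma P2 i i' b : (i < i')%nat -> (i' < n)%nat -> 0 <= sg b * v i -> 0 <= sg (negb b) * v i' ->
  (psi n u i b <= psi n u i' (negb b))%nat.
Proof.
  intros Hii' Hi' Hv Hv'.
  assert (G1 : (Lp u i <= psi n u i' (negb b))%nat).
  { destruct (psi_cases i' (negb b)) as [E|E]; rewrite E.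
    apply Lp_mono; lia. pose proof (Lp_le u i). pose proof (Rp_ge n u i'). lia. }
  unfold psi at 1. destruct (Rlt_dec 0 (sg b * u (Lp u i))).
  destruct (Nat.leb (DL n u i) (DR n u i)); auto. 2: auto.
  all: unfold psi; destruct (Rlt_dec 0 (sg (negb b) * u (Lp u i'))) as [C|C].
  all: try (apply Rp_mono; lia).
  all: destruct (Nat.leb_spec (DL n u i') (DR n u i')) as [C2|C2]; try (apply Rp_mono; lia).
  all: destruct (le_lt_dec (Rp n u i) i') as [h|h];
   [ apply Lp_ge; auto; apply Rp_nz_val; lia | ].
  all: assert (Z : forall j, (i <= j <= i')%nat -> u j = 0) by
         (intros j Hj; apply (Rp_zeros n u i j); lia).
  all: assert (EL : Lp u i' = Lp u i) by (apply Lp_zeros; [lia| intros; apply Z; lia]).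
  all: assert (ER : Rp n u i = Rp n u i') by (apply Rp_eq_zeros; [lia| intros; apply Z; lia]).
  all: rewrite EL in C; rewrite sg_negb in C.
  all: assert (HL : u (Lp u i) <> 0) by (intro E; rewrite E in C; lra).
  all: assert (DLi : DL n u i = (i - Lp u i)%nat) by (unfold DL, hasL; destruct Req_EM_T; auto; contradiction).
  all: assert (DLi' : DL n u i' = (i' - Lp u i)%nat) by (unfold DL, hasL; rewrite EL; destruct Req_EM_T; auto; contradiction).
  all: assert (DRr : (DR n u i' <= DR n u i)%nat) by
         (unfold DR; rewrite ER; destruct (Nat.ltb_spec (Rp n u i') n); lia).
  all: pose proof (Lp_le u i).
  all: assert (Hlt : (DL n u i < DR n u i)%nat) by lia.
  all: destruct (HF i ltac:(lia)) as [F1 _]; specialize (F1 Hlt).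
  all: pose proof (sign_from _ _ _ Hv F1); lra.
Qed.

Fixpoint WCh (i : nat) (b : bool) (k : nat) : Prop :=
  match k with
  | O => True
  | S k' => exists j, (i < j < n)%nat /\ 0 <= sg (negb b) * v j /\ WCh j (negb b) k'
  end.
Fixpoint SCh (i : nat) (k : nat) : Prop :=
  match k with
  | O => True
  | S k' => exists j, (i < j < n)%nat /\ u i * u j < 0 /\ SCh j k'
  end.

Lemma Claim k : forall i b, (i < n)%nat -> 0 <= sg b * v i -> WCh i b k -> SCh (psi n u i b) k.
Proof.
  induction k; intros i b Hi Hv W; simpl; auto.
  destruct W as [j [Hj [Hvj W]]].
  exists (psi n u j (negb b)).
  destruct (P1 i b Hi Hv) as [A1 A2]. destruct (P1 j (negb b) ltac:(lia) Hvj) as [B1 B2].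
  pose proof (P2 i j b ltac:(lia) ltac:(lia) Hv Hvj).
  rewrite sg_negb in B2.
  assert (Hneg : u (psi n u i b) * u (psi n u j (negb b)) < 0).
  { destruct (sg_cases b) as [S|S]; rewrite S in *; nra. }
  split; [|split; [auto| apply IHk; auto; lia]].
  split; auto. destruct (Nat.eq_dec (psi n u i b) (psi n u j (negb b))) as [E|E]; [|lia].
  rewrite E in Hneg. nra.
Qed.
End Comb.

Lemma WCh_shift n v i i' b k : (i <= i')%nat -> WCh n v i' b k -> WCh n v i b k.
Proof. destruct k; simpl; auto. intros H [j [Hj R]]. exists j; split; auto; lia. Qed.

Lemma extract n c v : compat n c v -> forall k i k', (i + k <= n - 1)%nat ->
  (k' <= cnt c i k)%nat -> WCh n v i (c i) k'.
Proof.
  intros Hc. induction k; intros i k' Hk Hk'; simpl in Hk'.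
  - replace k' with 0%nat by lia; simpl; auto.
  - destruct (Bool.eqb (c i) (c (S i))) eqn:E.
    + apply Bool.eqb_prop in E. apply WCh_shift with (S i). lia.
      rewrite E. apply IHk; lia.
    + destruct k' as [|k']. simpl; auto.
      simpl. exists (S i). assert (E' : c (S i) = negb (c i)).
      { destruct (c i), (c (S i)); simpl in *; auto; discriminate. }
      split. lia. split. rewrite <- E'. apply Hc. lia.
      rewrite <- E'. apply IHk; lia.
Qed.

Lemma cnt_pos c i a : c i <> c (i + a)%nat -> (1 <= cnt c i a)%nat.
Proof.
  revert i; induction a; intros i H. rewrite Nat.add_0_r in H; contradiction.
  simpl. destruct (Bool.eqb (c i) (c (S i))) eqn:E. 2: lia.
  apply Bool.eqb_prop in E. rewrite E in H. replace (i + S a)%nat with (S i + a)%nat in H by lia.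
  specialize (IHa (S i) H). lia.
Qed.

Lemma SCh_cnt n u c : compat n c u -> forall k i f, SCh n u i k -> (i + f = n - 1)%nat ->
  (k <= cnt c i f)%nat.
Proof.
  intros Hc. induction k; intros i f S Hf. lia.
  destruct S as [j [Hj [Hn S]]].
  replace f with ((j - i) + (n - 1 - j))%nat by lia. rewrite cnt_split.
  replace (i + (j - i))%nat with j by lia.
  specialize (IHk j (n - 1 - j)%nat S ltac:(lia)).
  assert (c i <> c (i + (j - i))%nat).
  { replace (i + (j - i))%nat with j by lia. intro E.
    pose proof (Hc i ltac:(lia)). pose proof (Hc j ltac:(lia)). rewrite E in *.
    destruct (sg_cases (c j)) as [S'|S']; rewrite S' in *; nra. }
  pose proof (cnt_pos c i (j - i) H). lia.
Qed.

Lemma FL_comb n u v k : (exists j, (j < n)%nat /\ u j <> 0) -> F2 n u v ->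
  WAlt n v k -> Alt n u k.
Proof.
  intros Hu HF [c [Hc Hk]] c' Hc'.
  assert (Hn : (1 <= n)%nat) by (destruct Hu as [j [Hj _]]; lia).
  pose proof (extract n c v Hc (n - 1) 0 k ltac:(lia) Hk) as W.
  pose proof (Claim n u v Hu HF k 0 (c 0%nat) ltac:(lia) (Hc 0%nat ltac:(lia)) W) as S.
  destruct (P1 n u v Hu HF 0 (c 0%nat) ltac:(lia) (Hc 0%nat ltac:(lia))) as [Hp _].
  set (p := psi n u 0 (c 0%nat)) in *.
  pose proof (SCh_cnt n u c' Hc' k p (n - 1 - p) S ltac:(lia)).
  unfold chg. replace (n - 1)%nat with (p + (n - 1 - p))%nat by lia. rewrite cnt_split. simpl. lia.
Qed.

Lemma mono_deriv g g' a b : a <= b ->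
  (forall c, a <= c <= b -> derivable_pt_lim g c (g' c)) ->
  (forall c, a <= c <= b -> 0 <= g' c) -> g a <= g b.
Proof.
  intros Hab Hd Hp. destruct (Rle_lt_or_eq_dec a b Hab) as [H|H]; [|subst; lra].
  destruct (MVT_cor2 g g' a b H Hd) as [c [E Hc]].
  assert (0 <= g' c * (b - a)) by (apply Rmult_le_pos; [apply Hp; lra| lra]). lra.
Qed.

Lemma deriv_shift_pow t0 k s :
  derivable_pt_lim (fun y => (y - t0) ^ k) s (INR k * (s - t0) ^ Nat.pred k).
Proof.
  assert (H := derivable_pt_lim_comp (fun y => y - t0) (fun y => y ^ k) s 1
    (INR k * (s - t0) ^ Nat.pred k)).
  replace (INR k * (s - t0) ^ Nat.pred k) with (INR k * (s - t0) ^ Nat.pred k * 1) by ring.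
  apply H.
  - replace 1 with (1 - 0) by ring. apply derivable_pt_lim_minus.
    apply derivable_pt_lim_id. apply derivable_pt_lim_const.
  - apply derivable_pt_lim_pow.
Qed.

Lemma lower_int g g' t0 h q m : 0 <= h ->
  (forall s, t0 <= s <= t0 + h -> derivable_pt_lim g s (g' s)) -> g t0 = 0 ->
  (forall s, t0 <= s <= t0 + h -> q * (s - t0) ^ m <= g' s) ->
  forall s, t0 <= s <= t0 + h -> q / INR (S m) * (s - t0) ^ (S m) <= g s.
Proof.
  intros Hh Hd H0 Hq s Hs.
  set (phi := fun y => g y - q / INR (S m) * (y - t0) ^ (S m)).
  assert (phi t0 <= phi s).
  { apply (mono_deriv phi (fun y => g' y - q / INR (S m) * (INR (S m) * (y - t0) ^ m))).
    lra.
    - intros c Hc. apply derivable_pt_lim_minus. apply Hd; lra.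
      apply derivable_pt_lim_scal. apply (deriv_shift_pow t0 (S m) c).
    - intros c Hc. assert (INR (S m) <> 0) by (apply not_0_INR; lia).
      replace (q / INR (S m) * (INR (S m) * (c - t0) ^ m)) with (q * (c - t0) ^ m) by (field; auto).
      specialize (Hq c ltac:(lra)). lra. }
  unfold phi in H. rewrite H0 in H. replace (t0 - t0) with 0 in H by ring.
  rewrite pow_i in H by lia. lra.
Qed.

Lemma fin_delta n (P : nat -> R -> Prop) :
  (forall i d d', 0 < d' <= d -> P i d -> P i d') ->
  (forall i, (i < n)%nat -> exists d, 0 < d /\ P i d) ->
  exists d, 0 < d /\ forall i, (i < n)%nat -> P i d.
Proof.
  intros Hm. induction n; intro H.
  - exists 1; split; [lra| intros; lia].
  - destruct IHn as [d1 [Hd1 P1]]. intros i Hi; apply H; lia.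
    destruct (H n ltac:(lia)) as [d2 [Hd2 P2]].
    exists (Rmin d1 d2). split. apply Rmin_glb_lt; auto.
    intros i Hi. destruct (Nat.eq_dec i n). subst. apply Hm with d2; auto.
    split. apply Rmin_glb_lt; auto. apply Rmin_r.
    apply Hm with d1; auto. split. apply Rmin_glb_lt; auto. apply Rmin_l. apply P1; lia.
Qed.

Lemma fin_N n (P : nat -> nat -> Prop) :
  (forall i N N', (N <= N')%nat -> P i N -> P i N') ->
  (forall i, (i < n)%nat -> exists N, P i N) ->
  exists N, forall i, (i < n)%nat -> P i N.
Proof.
  intros Hm. induction n; intro H.
  - exists 0%nat; intros; lia.
  - destruct IHn as [N1 P1]. intros i Hi; apply H; lia.
    destruct (H n ltac:(lia)) as [N2 P2].
    exists (Nat.max N1 N2). intros i Hi. destruct (Nat.eq_dec i n). subst.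
    apply Hm with N2; auto; lia. apply Hm with N1. lia. apply P1; lia.
Qed.

Definition sgn (r : R) : R := sg (can r).
Lemma sgn_sq r : sgn r * sgn r = 1.
Proof. unfold sgn; destruct (sg_cases (can r)) as [S|S]; rewrite S; lra. Qed.
Lemma sgn_cases r : sgn r = 1 \/ sgn r = -1.
Proof. apply sg_cases. Qed.
Lemma sgn_pos r : r <> 0 -> 0 < sgn r * r.
Proof. intro H. unfold sgn, can, sg. destruct (Rle_dec 0 r); lra. Qed.
Lemma sgn_same r r' : 0 < r * r' -> sgn r = sgn r'.
Proof. intro H. unfold sgn, can, sg. destruct (Rle_dec 0 r) as [a|a], (Rle_dec 0 r') as [b|b]; auto.
  apply Rnot_le_lt in b; nra. apply Rnot_le_lt in a; nra. Qed.
Lemma sgn_prod r w : r <> 0 -> 0 < sgn r * w -> 0 < r * w.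
Proof.
  intros H1 H2. pose proof (sgn_pos r H1). destruct (sgn_cases r) as [S|S]; rewrite S in *; nra.
Qed.

Lemma sumR_ext k f g : (forall j, (j < k)%nat -> f j = g j) -> sumR k f = sumR k g.
Proof. induction k; intro H; simpl; auto. rewrite IHk, H; auto; intros; apply H; lia. Qed.

Definition tri3 n (M : nat -> nat -> R) (v : nat -> R) (i : nat) : R :=
  (if (0 <? i)%nat then M i (i - 1)%nat * v (i - 1)%nat else 0) + M i i * v i +
  (if (i + 1 <? n)%nat then M i (i + 1)%nat * v (i + 1)%nat else 0).

Lemma matvec_tri n M v i : (i < n)%nat ->
  (forall j, (j < n)%nat -> (i + 1 < j \/ j + 1 < i)%nat -> M i j = 0) ->
  matvec n M v i = tri3 n M v i.
Proof.
  intros Hi HM. unfold matvec, tri3.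
  assert (G : forall k, (k <= n)%nat -> sumR k (fun j => M i j * v j) =
    (if (0 <? i)%nat && (i - 1 <? k)%nat then M i (i - 1)%nat * v (i - 1)%nat else 0) +
    (if (i <? k)%nat then M i i * v i else 0) +
    (if (i + 1 <? k)%nat then M i (i + 1)%nat * v (i + 1)%nat else 0)).
  { induction k; intro Hk; simpl.
    - destruct ((0 <? i)%nat); simpl; ring.
    - rewrite IHk by lia.
      destruct (Nat.ltb_spec 0 i); destruct (Nat.ltb_spec (i-1) k); destruct (Nat.ltb_spec (i-1) (S k));
      destruct (Nat.ltb_spec i k); destruct (Nat.ltb_spec i (S k));
      destruct (Nat.ltb_spec (i+1) k); destruct (Nat.ltb_spec (i+1) (S k)); simpl;
      try (exfalso; lia);
      try (replace k with (i - 1)%nat by lia; ring);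
      try (replace k with i by lia; ring);
      try (replace k with (i + 1)%nat by lia; ring);
      try (rewrite (HM k) by lia; ring). }
  rewrite G by lia.
  destruct (Nat.ltb_spec 0 i); destruct (Nat.ltb_spec (i-1) n); destruct (Nat.ltb_spec i n);
  simpl; try lia; ring.
Qed.

Definition tri n (M : R -> nat -> nat -> R) : Prop :=
  forall t i j, (i < n)%nat -> (j < n)%nat -> (i + 1 < j \/ j + 1 < i)%nat -> M t i j = 0.

Lemma deriv_tri n M z t i : tri n M -> is_solution n M z -> (i < n)%nat ->
  derivable_pt_lim (fun s => z s i) t (tri3 n (M t) (z t) i).
Proof. intros Ht Hs Hi. rewrite <- matvec_tri; auto. Qed.

Definition nsq n (a : nat -> R) : R := sumR n (fun i => a i * a i).

Lemma sumR_plus k f g : sumR k (fun j => f j + g j) = sumR k f + sumR k g.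
Proof. induction k; simpl; [ring| rewrite IHk; ring]. Qed.
Lemma sumR_scal k c f : sumR k (fun j => c * f j) = c * sumR k f.
Proof. induction k; simpl; [ring| rewrite IHk; ring]. Qed.
Lemma sumR_le k f g : (forall j, (j < k)%nat -> f j <= g j) -> sumR k f <= sumR k g.
Proof. induction k; intro H; simpl. lra. apply Rplus_le_compat. apply IHk; intros; apply H; lia. apply H; lia. Qed.
Lemma sumR_abs k f : Rabs (sumR k f) <= sumR k (fun j => Rabs (f j)).
Proof. induction k; simpl. rewrite Rabs_R0; lra. eapply Rle_trans. apply Rabs_triang. lra. Qed.
Lemma sumR_const k c : sumR k (fun _ => c) = INR k * c.
Proof. induction k; simpl sumR. simpl; ring. rewrite IHk, S_INR; ring. Qed.
Lemma sumR_nonneg k f : (forall j, (j < k)%nat -> 0 <= f j) -> 0 <= sumR k f.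
Proof. intro H. replace 0 with (sumR k (fun _ => 0)). apply sumR_le; auto. rewrite sumR_const; ring. Qed.
Lemma nsq_nonneg n a : 0 <= nsq n a.
Proof. apply sumR_nonneg. intros; nra. Qed.
Lemma nsq_ge n a i : (i < n)%nat -> a i * a i <= nsq n a.
Proof.
  unfold nsq. induction n; intro H. lia. simpl. destruct (Nat.eq_dec i n).
  subst. pose proof (sumR_nonneg n (fun i => a i * a i) ltac:(intros; nra)). lra.
  assert (a i * a i <= sumR n (fun i => a i * a i)) by (apply IHn; lia). nra.
Qed.
Lemma abs_le_nsq n a i : (i < n)%nat -> Rabs (a i) <= 1 + nsq n a.
Proof.
  intro H. pose proof (nsq_ge n a i H). unfold Rabs; destruct Rcase_abs; nra.
Qed.

Lemma deriv_sumR k (f : nat -> R -> R) f' t :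
  (forall i, (i < k)%nat -> derivable_pt_lim (f i) t (f' i)) ->
  derivable_pt_lim (fun s => sumR k (fun i => f i s)) t (sumR k f').
Proof.
  induction k; intro H; simpl.
  - apply derivable_pt_lim_const.
  - apply (derivable_pt_lim_plus (fun s => sumR k (fun i => f i s)) (f k)).
    apply IHk; intros; apply H; lia. apply H; lia.
Qed.

Lemma bilin n (E : nat -> nat -> R) e a b : 0 <= e ->
  (forall i j, (i < n)%nat -> (j < n)%nat -> Rabs (E i j) <= e) ->
  Rabs (sumR n (fun i => a i * sumR n (fun j => E i j * b j))) <= e * INR n * (nsq n a + nsq n b) / 2.
Proof.
  intros He HE. eapply Rle_trans. apply sumR_abs.
  eapply Rle_trans with (sumR n (fun i => sumR n (fun j => e * ((a i * a i + b j * b j) / 2)))).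
  - apply sumR_le. intros i Hi. rewrite Rabs_mult.
    eapply Rle_trans. apply Rmult_le_compat_l. apply Rabs_pos. apply sumR_abs.
    rewrite <- sumR_scal. apply sumR_le. intros j Hj. rewrite Rabs_mult.
    specialize (HE i j Hi Hj).
    assert (Rabs (a i) * Rabs (b j) <= (a i * a i + b j * b j) / 2).
    { pose proof (Rabs_pos (a i)); pose proof (Rabs_pos (b j)).
      assert (Rabs (a i) * Rabs (a i) = a i * a i) by (rewrite <- Rabs_mult; apply Rabs_pos_eq; nra).
      assert (Rabs (b j) * Rabs (b j) = b j * b j) by (rewrite <- Rabs_mult; apply Rabs_pos_eq; nra).
      assert (0 <= (Rabs (a i) - Rabs (b j)) * (Rabs (a i) - Rabs (b j))) by apply Rle_0_sqr.
      nra. }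
    pose proof (Rabs_pos (a i)); pose proof (Rabs_pos (b j)); pose proof (Rabs_pos (E i j)).
    assert (Rabs (a i) * (Rabs (E i j) * Rabs (b j)) <= Rabs (a i) * (e * Rabs (b j))).
    { apply Rmult_le_compat_l; auto. apply Rmult_le_compat_r; auto. }
    nra.
  - unfold nsq. right.
    transitivity (sumR n (fun i => e / 2 * (INR n * (a i * a i)) + e / 2 * sumR n (fun j => b j * b j))).
    + apply sumR_ext. intros i Hi.
      replace (fun j => e * ((a i * a i + b j * b j) / 2)) with
        (fun j => e / 2 * (a i * a i) + e / 2 * (b j * b j)) by (apply functional_extensionality; intro; field).
      rewrite sumR_plus, sumR_const, sumR_scal. ring.
    + rewrite sumR_plus, sumR_const, sumR_scal, sumR_scal. field.
Qed.

Lemma gron_fwd f f' c eta a b : a <= b -> 0 < c ->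
  (forall s, a <= s <= b -> derivable_pt_lim f s (f' s)) ->
  (forall s, a <= s <= b -> f' s <= c * f s + eta) ->
  f b + eta / c <= (f a + eta / c) * exp (c * (b - a)).
Proof.
  intros Hab Hc Hd Hb.
  set (phi := fun s => - ((f s + eta / c) * exp (- (c * (s - a))))).
  assert (phi a <= phi b).
  { apply (mono_deriv phi (fun s => - (f' s * exp (- (c * (s - a))) +
        (f s + eta / c) * (exp (- (c * (s - a))) * (- (c * (1 - 0))))))); auto.
    - intros s Hs. apply derivable_pt_lim_opp.
      apply (derivable_pt_lim_mult (fun s => f s + eta / c) (fun s => exp (- (c * (s - a))))).
      + replace (f' s) with (f' s + 0) by ring. apply derivable_pt_lim_plus. apply Hd; auto.
        apply derivable_pt_lim_const.
      + apply (derivable_pt_lim_comp (fun s => - (c * (s - a))) exp).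
        apply derivable_pt_lim_opp. apply derivable_pt_lim_scal.
        apply derivable_pt_lim_minus. apply derivable_pt_lim_id. apply derivable_pt_lim_const.
        apply derivable_pt_lim_exp.
    - intros s Hs. specialize (Hb s Hs). pose proof (exp_pos (- (c * (s - a)))).
      assert ((f' s - c * f s - eta) * exp (- (c * (s - a))) <= 0).
      { assert (0 <= (eta + c * f s - f' s) * exp (- (c * (s - a)))) by (apply Rmult_le_pos; lra). lra. }
      replace (- (f' s * exp (- (c * (s - a))) + (f s + eta / c) * (exp (- (c * (s - a))) * - (c * (1 - 0)))))
        with (- ((f' s - c * f s - eta) * exp (- (c * (s - a))))) by (field; lra).
      lra. }
  unfold phi in H. replace (- (c * (a - a))) with 0 in H by ring. rewrite exp_0 in H.
  assert (E : exp (c * (b - a)) * exp (- (c * (b - a))) = 1).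
  { rewrite <- exp_plus. replace (c * (b - a) + - (c * (b - a))) with 0 by ring. apply exp_0. }
  pose proof (exp_pos (c * (b - a))).
  assert ((f b + eta / c) * exp (- (c * (b - a))) <= f a + eta / c) by lra.
  apply Rmult_le_compat_r with (r := exp (c * (b - a))) in H1; [|lra].
  replace ((f b + eta / c) * exp (- (c * (b - a))) * exp (c * (b - a))) with (f b + eta / c) in H1.
  lra. rewrite Rmult_assoc, (Rmult_comm (exp _)), E. ring.
Qed.

Lemma deriv_opp_arg f f' s : derivable_pt_lim f (- s) (f' (- s)) ->
  derivable_pt_lim (fun y => f (- y)) s (- f' (- s)).
Proof.
  intro H. replace (- f' (- s)) with (f' (- s) * (- 1)) by ring.
  apply (derivable_pt_lim_comp (fun y => - y) f). replace (-1) with (- (1)) by ring.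
  apply derivable_pt_lim_opp. apply derivable_pt_lim_id. exact H.
Qed.

Lemma gron_bwd f f' c eta a b : a <= b -> 0 < c ->
  (forall s, a <= s <= b -> derivable_pt_lim f s (f' s)) ->
  (forall s, a <= s <= b -> - f' s <= c * f s + eta) ->
  f a + eta / c <= (f b + eta / c) * exp (c * (b - a)).
Proof.
  intros Hab Hc Hd Hb.
  pose proof (gron_fwd (fun y => f (- y)) (fun y => - f' (- y)) c eta (- b) (- a)
    ltac:(lra) Hc) as G.
  replace (- a - - b) with (b - a) in G by ring. rewrite !Ropp_involutive in G. apply G.
  - intros s Hs. apply deriv_opp_arg. apply Hd; lra.
  - intros s Hs. apply Hb; lra.
Qed.

Section Energy.
Variables (n : nat) (M : R -> nat -> nat -> R) (z : R -> nat -> R) (K : R).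
Hypothesis HK : 0 <= K.
Hypothesis Hb : forall t i j, (i < n)%nat -> (j < n)%nat -> Rabs (M t i j) <= K.
Hypothesis Hs : is_solution n M z.

Definition cE := 2 * K * INR n + 1.
Lemma cE_pos : 0 < cE.
Proof. unfold cE. pose proof (pos_INR n). nra. Qed.

Lemma energy_deriv t : derivable_pt_lim (fun s => nsq n (z s)) t
  (sumR n (fun i => 2 * (z t i * matvec n (M t) (z t) i))).
Proof.
  unfold nsq. apply (deriv_sumR n (fun i s => z s i * z s i)).
  intros i Hi. replace (2 * (z t i * matvec n (M t) (z t) i)) with
    (matvec n (M t) (z t) i * z t i + z t i * matvec n (M t) (z t) i) by ring.
  apply (derivable_pt_lim_mult (fun s => z s i) (fun s => z s i)); apply Hs; auto.
Qed.

Lemma energy_dbound t : Rabs (sumR n (fun i => 2 * (z t i * matvec n (M t) (z t) i))) <= cE * nsq n (z t).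
Proof.
  rewrite sumR_scal, Rabs_mult, Rabs_pos_eq by lra.
  pose proof (bilin n (M t) K (z t) (z t) HK (Hb t)). unfold matvec in *.
  pose proof (nsq_nonneg n (z t)). unfold cE. nra.
Qed.

Lemma energy_up a b : a <= b -> nsq n (z b) <= nsq n (z a) * exp (cE * (b - a)).
Proof.
  intro H. pose proof (gron_fwd (fun s => nsq n (z s)) _ cE 0 a b H cE_pos
    (fun s _ => energy_deriv s)) as G.
  replace (0 / cE) with 0 in G by (field; pose proof cE_pos; lra).
  rewrite !Rplus_0_r in G. apply G. intros s _. pose proof (energy_dbound s).
  revert H0; unfold Rabs; destruct Rcase_abs; intros; lra.
Qed.

Lemma energy_down a b : a <= b -> nsq n (z a) <= nsq n (z b) * exp (cE * (b - a)).
Proof.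
  intro H. pose proof (gron_bwd (fun s => nsq n (z s)) _ cE 0 a b H cE_pos
    (fun s _ => energy_deriv s)) as G.
  replace (0 / cE) with 0 in G by (field; pose proof cE_pos; lra).
  rewrite !Rplus_0_r in G. apply G. intros s _. pose proof (energy_dbound s).
  revert H0; unfold Rabs; destruct Rcase_abs; intros; lra.
Qed.

Lemma energy_pos t0 : 0 < nsq n (z t0) -> forall t, 0 < nsq n (z t).
Proof.
  intros H t. destruct (Rle_dec t0 t).
  - pose proof (energy_down t0 t r). pose proof (exp_pos (cE * (t - t0))).
    pose proof (nsq_nonneg n (z t)). destruct (Rle_lt_or_eq_dec 0 _ H2); auto.
    rewrite <- e in H0. lra.
  - pose proof (energy_up t t0 ltac:(lra)). pose proof (exp_pos (cE * (t0 - t))).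
    pose proof (nsq_nonneg n (z t)). destruct (Rle_lt_or_eq_dec 0 _ H2); auto.
    rewrite <- e in H0. lra.
Qed.
End Energy.

Lemma nsq_pos_of n a : (exists i, (i < n)%nat /\ a i <> 0) -> 0 < nsq n a.
Proof.
  intros [i [Hi Ha]]. pose proof (nsq_ge n a i Hi).
  assert (0 < a i * a i) by (apply Rsqr_pos_lt in Ha; exact Ha). lra.
Qed.

Lemma nz_of_nsq n a : 0 < nsq n a -> exists i, (i < n)%nat /\ a i <> 0.
Proof.
  intro H. apply NNPP; intro H'.
  assert (nsq n a = 0).
  { unfold nsq. transitivity (sumR n (fun _ => 0)). apply sumR_ext.
    intros j Hj. destruct (Req_EM_T (a j) 0) as [E|E]. rewrite E; ring. exfalso; apply H'; eauto.
    rewrite sumR_const; ring. }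
  lra.
Qed.

Lemma exp_le a b : a <= b -> exp a <= exp b.
Proof. intro H. destruct (Rle_lt_or_eq_dec a b H). left; apply exp_increasing; auto. subst; lra. Qed.

Lemma cont_of_deriv f l x : derivable_pt_lim f x l ->
  forall e, 0 < e -> exists d, 0 < d /\ forall y, Rabs (y - x) < d -> Rabs (f y - f x) < e.
Proof.
  intros H e He. pose proof (derivable_continuous_pt f x (exist _ l H)) as C.
  destruct (C e He) as [d [Hd Hy]]. exists d. split; auto. intros y Hyd.
  destruct (Req_dec y x). subst. rewrite Rminus_diag, Rabs_R0; auto.
  apply (Hy y). split. split. constructor. auto. exact Hyd.
Qed.

Lemma sgn_abs r : sgn r * r = Rabs r.
Proof. unfold sgn, can, sg, Rabs. destruct (Rle_dec 0 r), (Rcase_abs r); lra. Qed.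

Section Dist.
Variable n : nat.
Variable u : nat -> R.
Hypothesis Hu : exists j, (j < n)%nat /\ u j <> 0.
Notation DL := (DL n u).
Notation DR := (DR n u).
Notation Rp := (Rp n u).

Lemma DL_nz i : u i <> 0 -> DL i = 0%nat.
Proof. intro H. unfold DL, hasL. rewrite Lp_nz by auto. destruct Req_EM_T; [contradiction|lia]. Qed.
Lemma DR_nz i : (i < n)%nat -> u i <> 0 -> DR i = 0%nat.
Proof. intros Hi H. unfold DR. rewrite Rp_nz by auto. destruct (Nat.ltb_spec i n); lia. Qed.
Lemma DL0_nz i : (i < n)%nat -> DL i = 0%nat -> u i <> 0 /\ Lp u i = i.
Proof.
  intros Hi H. unfold DL, hasL in H. destruct Req_EM_T in H. lia.
  pose proof (Lp_le u i). assert (Lp u i = i) by lia. rewrite H1 in n0. auto.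
Qed.
Lemma DR0_nz i : (i < n)%nat -> DR i = 0%nat -> u i <> 0 /\ Rp i = i.
Proof.
  intros Hi H. unfold DR in H. destruct (Nat.ltb_spec (Rp i) n). 2: lia.
  pose proof (Rp_ge n u i). assert (Rp i = i) by lia. split; auto.
  rewrite <- H2 at 1. apply Rp_nz_val; auto.
Qed.
Lemma DL_z i : (1 <= i)%nat -> (i < n)%nat -> u i = 0 -> Lp u i = Lp u (i - 1)%nat /\
  ((DL i = S (DL (i - 1)) /\ (DL (i-1) < n)%nat) \/ (DL i = n /\ DL (i - 1) = n)).
Proof.
  intros H1 H2 H3. assert (E : Lp u i = Lp u (i - 1)).
  { replace i with (S (i - 1)) at 1 by lia. apply Lp_z. replace (S (i-1)) with i by lia; auto. }
  split; auto. unfold DL, hasL. rewrite E.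
  destruct Req_EM_T; [right; auto|left]. pose proof (Lp_le u (i-1)). lia.
Qed.
Lemma DR_z i : (i + 1 < n)%nat -> u i = 0 -> Rp (i + 1)%nat = Rp i /\
  ((DR i = S (DR (i + 1)) /\ (DR (i + 1) < n)%nat) \/ (DR i = n /\ DR (i + 1) = n)).
Proof.
  intros H1 H2. assert (E : Rp (i+1) = Rp i).
  { symmetry. replace (i+1)%nat with (S i) by lia. apply Rp_z; auto; lia. }
  split; auto. unfold DR. rewrite E. pose proof (Rp_ge n u (i+1)). rewrite E in H.
  destruct (Nat.ltb_spec (Rp i) n); [left|right]; lia.
Qed.
Lemma DL_le' i : (i < n)%nat -> (DL i <= n)%nat.
Proof. apply DL_le. Qed.
Lemma DR_le' i : (i < n)%nat -> (DR i <= n)%nat.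
Proof. intro; apply DR_le; lia. Qed.
Lemma not_both i : (i < n)%nat -> (DL i < n)%nat \/ (DR i < n)%nat.
Proof. intros; apply not_both_inf; auto. Qed.
Lemma DL_lt_i i : (i < n)%nat -> (DL i < n)%nat -> (DL i <= i)%nat /\ u (Lp u i) <> 0 /\ DL i = (i - Lp u i)%nat.
Proof. intros. destruct (DL_lt_has n u i H H0). split; auto. pose proof (Lp_le u i); lia. Qed.

Lemma Lnb i m : (i < n)%nat -> DL i = S m -> (S m <= DR i)%nat ->
  (1 <= i)%nat /\ u i = 0 /\ Lp u (i - 1)%nat = Lp u i /\
  ((u (i - 1)%nat <> 0 /\ m = 0%nat /\ Lp u i = (i - 1)%nat) \/
   (u (i - 1)%nat = 0 /\ DL (i - 1)%nat = m /\ (m < DR (i - 1)%nat)%nat)).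
Proof.
  intros Hi HL HR. pose proof (DL_le' i Hi). pose proof (DR_le' i Hi).
  assert (HLn : (DL i < n)%nat).
  { destruct (not_both i Hi); lia. }
  destruct (DL_lt_i i Hi HLn) as [h1 [h2 h3]].
  assert (Hui : u i = 0) by (destruct (Req_EM_T (u i) 0); auto; rewrite DL_nz in HL; [lia|auto]).
  assert (H1 : (1 <= i)%nat) by lia.
  destruct (DL_z i H1 Hi Hui) as [E D]. split; auto. split; auto. split; auto.
  destruct (Req_EM_T (u (i-1)%nat) 0) as [Z|Z].
  - right. split; auto. destruct D as [[D1 D2]|[D1 D2]]; [|lia].
    split. lia.
    destruct (DR_z (i - 1) ltac:(lia) Z) as [E2 D']. replace (i - 1 + 1)%nat with i in * by lia.
    destruct D' as [[D3 D4]|[D3 D4]]; lia.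
  - left. split; auto. rewrite E. rewrite Lp_nz by auto. split; auto.
    rewrite h3, E, Lp_nz in HL by auto. lia.
Qed.

Lemma Rnb i m : (i < n)%nat -> DR i = S m -> (S m <= DL i)%nat ->
  (i + 1 < n)%nat /\ u i = 0 /\ Rp (i + 1)%nat = Rp i /\
  ((u (i + 1)%nat <> 0 /\ m = 0%nat /\ Rp i = (i + 1)%nat) \/
   (u (i + 1)%nat = 0 /\ DR (i + 1)%nat = m /\ (m < DL (i + 1)%nat)%nat)).
Proof.
  intros Hi HR HL. pose proof (DL_le' i Hi). pose proof (DR_le' i Hi).
  assert (HRn : (DR i < n)%nat).
  { destruct (not_both i Hi); lia. }
  destruct (DR_lt_has n u i HRn) as [h1 h2].
  assert (Hui : u i = 0) by (destruct (Req_EM_T (u i) 0); auto; rewrite DR_nz in HR; [lia|auto|auto]).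
  assert (H1 : (i + 1 < n)%nat) by lia.
  destruct (DR_z i H1 Hui) as [E D]. split; auto. split; auto. split; auto.
  destruct (Req_EM_T (u (i+1)%nat) 0) as [Z|Z].
  - right. split; auto. destruct D as [[D1 D2]|[D1 D2]]; [|lia].
    split. lia.
    destruct (DL_z (i + 1) ltac:(lia) ltac:(lia) Z) as [E2 D']. replace (i + 1 - 1)%nat with i in * by lia.
    destruct D' as [[D3 D4]|[D3 D4]]; lia.
  - left. split; auto. rewrite <- E. rewrite Rp_nz by auto. split; auto.
    rewrite h2, <- E, Rp_nz in HR by auto. lia.
Qed.

Lemma farR i : (i + 1 < n)%nat -> (DL i < DR i)%nat ->
  (DL i <= DL (i + 1)%nat)%nat /\ (DL i <= DR (i + 1)%nat)%nat.
Proof.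
  intros Hi H. destruct (Nat.eq_dec (DL i) 0) as [Z|Z]. lia.
  assert (Hui : u i = 0) by (destruct (Req_EM_T (u i) 0); auto; rewrite DL_nz in Z; [lia|auto]).
  destruct (DR_z i Hi Hui) as [E D].
  destruct (Req_EM_T (u (i+1)%nat) 0) as [Z2|Z2].
  - destruct (DL_z (i+1) ltac:(lia) Hi Z2) as [E2 D2]. replace (i+1-1)%nat with i in * by lia.
    pose proof (DR_le' i ltac:(lia)). destruct D, D2; lia.
  - rewrite (DR_nz (i+1)) in D by auto. destruct D; lia.
Qed.

Lemma farL i : (1 <= i)%nat -> (i < n)%nat -> (DR i < DL i)%nat ->
  (DR i <= DL (i - 1)%nat)%nat /\ (DR i <= DR (i - 1)%nat)%nat.
Proof.
  intros H1 Hi H. destruct (Nat.eq_dec (DR i) 0) as [Z|Z]. lia.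
  assert (Hui : u i = 0) by (destruct (Req_EM_T (u i) 0); auto; rewrite DR_nz in Z; [lia|auto|auto]).
  destruct (DL_z i H1 Hi Hui) as [E D].
  destruct (Req_EM_T (u (i-1)%nat) 0) as [Z2|Z2].
  - destruct (DR_z (i-1) ltac:(lia) Z2) as [E2 D2]. replace (i-1+1)%nat with i in * by lia.
    pose proof (DL_le' i ltac:(lia)). destruct D, D2; lia.
  - rewrite (DL_nz (i-1)) in D by auto. destruct D; lia.
Qed.

Lemma Dstep i m : (i < n)%nat -> (S m <= DL i)%nat -> (S m <= DR i)%nat ->
  u i = 0 /\ ((1 <= i)%nat -> (m <= DL (i - 1)%nat)%nat /\ (m <= DR (i - 1)%nat)%nat) /\
  ((i + 1 < n)%nat -> (m <= DL (i + 1)%nat)%nat /\ (m <= DR (i + 1)%nat)%nat).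
Proof.
  intros Hi HL HR.
  assert (Hui : u i = 0) by (destruct (Req_EM_T (u i) 0); auto; rewrite DL_nz in HL; [lia|auto]).
  split; auto. split.
  - intro H1. destruct (DL_z i H1 Hi Hui) as [E D].
    destruct (Req_EM_T (u (i-1)%nat) 0) as [Z2|Z2].
    + destruct (DR_z (i-1) ltac:(lia) Z2) as [E2 D2]. replace (i-1+1)%nat with i in * by lia.
      destruct D, D2; lia.
    + rewrite (DL_nz (i-1)) in D by auto. destruct D; lia.
  - intro H1. destruct (DR_z i H1 Hui) as [E D].
    destruct (Req_EM_T (u (i+1)%nat) 0) as [Z2|Z2].
    + destruct (DL_z (i+1) ltac:(lia) H1 Z2) as [E2 D2]. replace (i+1-1)%nat with i in * by lia.
      destruct D, D2; lia.
    + rewrite (DR_nz (i+1)) in D by auto. destruct D; lia.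
Qed.
End Dist.

Lemma abs_sig sig : (sig = 1 \/ sig = -1) -> Rabs sig = 1.
Proof. intros [H|H]; subst; unfold Rabs; destruct Rcase_abs; lra. Qed.

Lemma tri3_bound n M v i K X : 0 <= K -> 0 <= X -> (forall j, (j < n)%nat -> Rabs (M i j) <= K) ->
  (i < n)%nat ->
  ((0 < i)%nat -> Rabs (v (i - 1)%nat) <= X) -> Rabs (v i) <= X ->
  ((i + 1 < n)%nat -> Rabs (v (i + 1)%nat) <= X) -> Rabs (tri3 n M v i) <= 3 * K * X.
Proof.
  intros HK HX HM Hi H1 H2 H3. unfold tri3.
  assert (A2 : Rabs (M i i * v i) <= K * X) by (rewrite Rabs_mult; apply Rmult_le_compat; auto using Rabs_pos).
  assert (A1 : Rabs (if (0 <? i)%nat then M i (i - 1)%nat * v (i - 1)%nat else 0) <= K * X).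
  { destruct (Nat.ltb_spec 0 i). rewrite Rabs_mult; apply Rmult_le_compat; auto using Rabs_pos.
    apply HM; lia. rewrite Rabs_R0; nra. }
  assert (A3 : Rabs (if (i + 1 <? n)%nat then M i (i + 1)%nat * v (i + 1)%nat else 0) <= K * X).
  { destruct (Nat.ltb_spec (i+1) n). rewrite Rabs_mult; apply Rmult_le_compat; auto using Rabs_pos.
    rewrite Rabs_R0; nra. }
  eapply Rle_trans. apply Rabs_triang. eapply Rle_trans. apply Rplus_le_compat_r. apply Rabs_triang.
  lra.
Qed.

Lemma tri3_L n M v i K X eps Y sig : (0 < i)%nat -> (i < n)%nat -> 0 <= K -> 0 <= X ->
  eps <= M i (i - 1)%nat -> 0 <= eps -> 0 <= Y -> Y <= sig * v (i - 1)%nat ->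
  (forall j, (j < n)%nat -> Rabs (M i j) <= K) -> Rabs (v i) <= X ->
  ((i + 1 < n)%nat -> Rabs (v (i + 1)%nat) <= X) -> (sig = 1 \/ sig = -1) ->
  eps * Y - 2 * K * X <= sig * tri3 n M v i.
Proof.
  intros Hi Hn HK HX He He0 HY HY2 HM H2 H3 Hs. unfold tri3.
  destruct (Nat.ltb_spec 0 i); [|lia].
  assert (A1 : eps * Y <= sig * (M i (i - 1)%nat * v (i - 1)%nat)).
  { replace (sig * (M i (i - 1)%nat * v (i - 1)%nat)) with (M i (i-1)%nat * (sig * v (i-1)%nat)) by ring.
    apply Rmult_le_compat; lra. }
  assert (A2 : Rabs (sig * (M i i * v i)) <= K * X).
  { rewrite !Rabs_mult. rewrite (abs_sig sig Hs), Rmult_1_l; apply Rmult_le_compat; auto using Rabs_pos. }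
  assert (A3 : Rabs (sig * (if (i + 1 <? n)%nat then M i (i + 1)%nat * v (i + 1)%nat else 0)) <= K * X).
  { destruct (Nat.ltb_spec (i+1) n). rewrite !Rabs_mult. rewrite (abs_sig sig Hs), Rmult_1_l; apply Rmult_le_compat; auto using Rabs_pos.
    rewrite Rmult_0_r, Rabs_R0; nra. }
  revert A2 A3. unfold Rabs. repeat destruct Rcase_abs; intros; nra.
Qed.

Lemma tri3_R n M v i K X eps Y sig : (i + 1 < n)%nat -> 0 <= K -> 0 <= X ->
  eps <= M i (i + 1)%nat -> 0 <= eps -> 0 <= Y -> Y <= sig * v (i + 1)%nat ->
  (forall j, (j < n)%nat -> Rabs (M i j) <= K) -> Rabs (v i) <= X ->
  ((0 < i)%nat -> Rabs (v (i - 1)%nat) <= X) -> (sig = 1 \/ sig = -1) ->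
  eps * Y - 2 * K * X <= sig * tri3 n M v i.
Proof.
  intros Hn HK HX He He0 HY HY2 HM H2 H3 Hs. unfold tri3.
  destruct (Nat.ltb_spec (i + 1) n); [|lia].
  assert (A1 : eps * Y <= sig * (M i (i + 1)%nat * v (i + 1)%nat)).
  { replace (sig * (M i (i + 1)%nat * v (i + 1)%nat)) with (M i (i+1)%nat * (sig * v (i+1)%nat)) by ring.
    apply Rmult_le_compat; lra. }
  assert (A2 : Rabs (sig * (M i i * v i)) <= K * X).
  { rewrite !Rabs_mult. rewrite (abs_sig sig Hs), Rmult_1_l; apply Rmult_le_compat; auto using Rabs_pos; apply HM; lia. }
  assert (A3 : Rabs (sig * (if (0 <? i)%nat then M i (i - 1)%nat * v (i - 1)%nat else 0)) <= K * X).
  { destruct (Nat.ltb_spec 0 i). rewrite !Rabs_mult. rewrite (abs_sig sig Hs), Rmult_1_l; apply Rmult_le_compat; auto using Rabs_pos; apply HM; lia.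
    rewrite Rmult_0_r, Rabs_R0; nra. }
  revert A2 A3. unfold Rabs. repeat destruct Rcase_abs; intros; nra.
Qed.

Lemma tri3_LR n M v i K X eps Y sig : (0 < i)%nat -> (i + 1 < n)%nat -> 0 <= K -> 0 <= X ->
  eps <= M i (i - 1)%nat -> 0 <= M i (i + 1)%nat -> 0 <= eps -> 0 <= Y -> Y <= sig * v (i - 1)%nat ->
  0 <= sig * v (i + 1)%nat ->
  (forall j, (j < n)%nat -> Rabs (M i j) <= K) -> Rabs (v i) <= X -> (sig = 1 \/ sig = -1) ->
  eps * Y - 2 * K * X <= sig * tri3 n M v i.
Proof.
  intros Hi Hn HK HX He He1 He0 HY HY2 HY3 HM H2 Hs. unfold tri3.
  destruct (Nat.ltb_spec 0 i); [|lia]. destruct (Nat.ltb_spec (i + 1) n); [|lia].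
  assert (A1 : eps * Y <= sig * (M i (i - 1)%nat * v (i - 1)%nat)).
  { replace (sig * (M i (i - 1)%nat * v (i - 1)%nat)) with (M i (i-1)%nat * (sig * v (i-1)%nat)) by ring.
    apply Rmult_le_compat; lra. }
  assert (A3 : 0 <= sig * (M i (i + 1)%nat * v (i + 1)%nat)).
  { replace (sig * (M i (i + 1)%nat * v (i + 1)%nat)) with (M i (i+1)%nat * (sig * v (i+1)%nat)) by ring.
    apply Rmult_le_pos; lra. }
  assert (A2 : Rabs (sig * (M i i * v i)) <= K * X).
  { rewrite !Rabs_mult. rewrite (abs_sig sig Hs), Rmult_1_l; apply Rmult_le_compat; auto using Rabs_pos; apply HM; lia. }
  revert A2. unfold Rabs. repeat destruct Rcase_abs; intros; nra.
Qed.

Section Local.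
Variables (n : nat) (B : R -> nat -> nat -> R) (z : R -> nat -> R) (K eps t0 : R).
Hypothesis Htri : tri n B.
Hypothesis HK : 0 <= K.
Hypothesis Hb : forall t i j, (i < n)%nat -> (j < n)%nat -> Rabs (B t i j) <= K.
Hypothesis Heps : 0 < eps.
Hypothesis Hoff : forall t i, (i + 1 < n)%nat -> eps <= B t i (i + 1)%nat /\ eps <= B t (i + 1)%nat i.
Hypothesis Hsol : is_solution n B z.
Hypothesis Hnz : exists j, (j < n)%nat /\ z t0 j <> 0.

Notation u := (z t0).

Lemma zder t i : (i < n)%nat -> derivable_pt_lim (fun s => z s i) t (tri3 n (B t) (z t) i).
Proof. intro; apply deriv_tri; auto. Qed.

Lemma offL t i : (0 < i)%nat -> (i < n)%nat -> eps <= B t i (i - 1)%nat.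
Proof. intros. destruct (Hoff t (i - 1) ltac:(lia)) as [_ h]. replace (i - 1 + 1)%nat with i in h by lia. auto. Qed.
Lemma offR t i : (i + 1 < n)%nat -> eps <= B t i (i + 1)%nat.
Proof. intros. apply Hoff; auto. Qed.

Lemma Bound0 : exists C0, 0 < C0 /\ forall s, t0 <= s <= t0 + 1 -> forall i, (i < n)%nat -> Rabs (z s i) <= C0.
Proof.
  exists (1 + nsq n u * exp (cE n K)). split.
  - pose proof (nsq_nonneg n u). pose proof (exp_pos (cE n K)). nra.
  - intros s Hs i Hi. eapply Rle_trans. apply abs_le_nsq; eauto.
    pose proof (energy_up n B z K HK Hb Hsol t0 s ltac:(lra)).
    pose proof (nsq_nonneg n u).
    assert (exp (cE n K * (s - t0)) <= exp (cE n K)).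
    { apply exp_le. pose proof (cE_pos n K HK). nra. }
    assert (nsq n u * exp (cE n K * (s - t0)) <= nsq n u * exp (cE n K)) by (apply Rmult_le_compat_l; auto).
    lra.
Qed.

Definition Dm i := Nat.min (DL n u i) (DR n u i).

Lemma Ubound m : exists C h, 0 < C /\ 0 < h /\ h <= 1 /\ forall i, (i < n)%nat ->
  (m <= Dm i)%nat -> forall s, t0 <= s <= t0 + h -> Rabs (z s i) <= C * (s - t0) ^ m.
Proof.
  induction m.
  - destruct Bound0 as [C0 [HC0 HB0]]. exists C0, 1. split; auto. split. lra. split. lra.
    intros i Hi _ s Hs. simpl. rewrite Rmult_1_r. apply HB0; auto.
  - destruct IHm as [C [h [HC [Hh [Hh1 HU]]]]].
    exists (3 * K * C / INR (S m) + 1), h. split.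
    { assert (0 < INR (S m)) by (apply lt_0_INR; lia).
      assert (0 <= 3 * K * C / INR (S m)) by (unfold Rdiv; apply Rmult_le_pos; [nra| left; apply Rinv_0_lt_compat; lra]). lra. }
    split; auto. split; auto.
    intros i Hi Hm s Hs. unfold Dm in Hm.
    destruct (Dstep n u i m Hi ltac:(lia) ltac:(lia)) as [Hui [HL HR]].
    assert (Hd : forall y, t0 <= y <= t0 + h -> Rabs (tri3 n (B y) (z y) i) <= 3 * K * (C * (y - t0) ^ m)).
    { intros y Hy. assert (0 <= (y - t0) ^ m) by (apply pow_le; lra).
      refine (tri3_bound n (B y) (z y) i K (C * (y - t0) ^ m) HK _ _ Hi _ _ _).
      - apply Rmult_le_pos; lra.
      - intros; apply Hb; auto.
      - intro. apply HU; auto. lia. unfold Dm. destruct (HL ltac:(lia)); lia.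
      - apply HU; auto. unfold Dm. lia.
      - intro. apply HU; auto. unfold Dm. destruct (HR ltac:(lia)); lia. }
    assert (G1 := lower_int (fun y => z y i) (fun y => tri3 n (B y) (z y) i) t0 h (- (3 * K * C)) m
      ltac:(lra) (fun y _ => zder y i Hi) Hui).
    assert (G2 := lower_int (fun y => - z y i) (fun y => - tri3 n (B y) (z y) i) t0 h (- (3 * K * C)) m
      ltac:(lra) (fun y _ => derivable_pt_lim_opp _ _ _ (zder y i Hi)) ltac:(cbv beta; rewrite Hui; ring)).
    assert (H1 : - (3 * K * C) / INR (S m) * (s - t0) ^ S m <= z s i).
    { apply G1; auto. intros y Hy. specialize (Hd y Hy). revert Hd; unfold Rabs; destruct Rcase_abs; intros; nra. }
    assert (H2 : - (3 * K * C) / INR (S m) * (s - t0) ^ S m <= - z s i).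
    { apply G2; auto. intros y Hy. specialize (Hd y Hy). revert Hd; unfold Rabs; destruct Rcase_abs; intros; nra. }
    assert (0 <= (s - t0) ^ S m) by (apply pow_le; lra).
    assert (E : - (3 * K * C) / INR (S m) = - (3 * K * C / INR (S m))) by (unfold Rdiv; ring).
    rewrite E in H1, H2.
    unfold Rabs; destruct Rcase_abs; nra.
Qed.

Definition LoP m c h := forall i, (i < n)%nat -> forall s, t0 <= s <= t0 + h ->
   (DL n u i = m -> (m < DR n u i)%nat -> c * (s - t0) ^ m <= sgn (u (Lp u i)) * z s i) /\
   (DR n u i = m -> (m < DL n u i)%nat -> c * (s - t0) ^ m <= sgn (u (Rp n u i)) * z s i) /\
   (DL n u i = m -> DR n u i = m -> 0 < u (Lp u i) * u (Rp n u i) ->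
      c * (s - t0) ^ m <= sgn (u (Lp u i)) * z s i).

Lemma LoP_mono m c h h' : 0 < h' <= h -> LoP m c h -> LoP m c h'.
Proof. intros Hh H i Hi s Hs. apply H; auto; lra. Qed.

Lemma Lbase : exists c h, 0 < c /\ 0 < h /\ LoP 0 c h.
Proof.
  set (mu := mnabs u n). assert (Hmu : 0 < mu) by apply mnabs_pos.
  destruct (fin_delta n (fun i d => forall y, Rabs (y - t0) < d -> Rabs (z y i - z t0 i) < mu / 2))
    as [d [Hd Hdd]].
  - intros i d d' Hd' H y Hy. apply H; lra.
  - intros i Hi. apply (cont_of_deriv _ _ _ (zder t0 i Hi)). lra.
  - exists (mu / 2), (d / 2). split. lra. split. lra.
    intros i Hi s Hs. split; [|split].
    + intros H1 H2. destruct (DL0_nz n u i Hi H1). rewrite DR_nz in H2; auto; lia.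
    + intros H1 H2. destruct (DR0_nz n u i Hi H1). rewrite DL_nz in H2; auto; lia.
    + intros H1 _ _. destruct (DL0_nz n u i Hi H1) as [Hu Hl]. rewrite Hl. simpl. rewrite Rmult_1_r.
      assert (Rabs (z s i - z t0 i) < mu / 2) by (apply Hdd; auto; unfold Rabs; destruct Rcase_abs; lra).
      pose proof (mnabs_le u n i Hi Hu). fold mu in H0. pose proof (sgn_abs (z t0 i)).
      replace (sgn (z t0 i) * z s i) with (sgn (z t0 i) * z t0 i + sgn (z t0 i) * (z s i - z t0 i)) by ring.
      destruct (sgn_cases (z t0 i)) as [S|S]; rewrite S in *;
      revert H; unfold Rabs; repeat destruct Rcase_abs; intros; lra.
Qed.

Lemma q_bound eps' c K' C d P : 0 <= K' -> 0 <= C -> 0 < eps' -> 0 < c -> 0 <= d -> 0 <= P ->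
  d <= eps' * c / (4 * (K' * C + 1)) ->
  eps' * c / 2 * P <= eps' * (c * P) - 2 * K' * (C * (P * d)).
Proof.
  intros. assert (0 < K' * C + 1) by nra.
  assert (4 * (K' * C + 1) * d <= eps' * c).
  { apply Rmult_le_compat_l with (r := 4 * (K' * C + 1)) in H5; [|lra].
    replace (4 * (K' * C + 1) * (eps' * c / (4 * (K' * C + 1)))) with (eps' * c) in H5 by (field; lra). lra. }
  assert (0 <= K' * C * d) by (apply Rmult_le_pos; nra).
  nra.
Qed.

Lemma Lstep m c h : 0 < c -> 0 < h -> LoP m c h ->
  exists c' h', 0 < c' /\ 0 < h' /\ LoP (S m) c' h'.
Proof.
  intros Hc Hh HL.
  destruct (Ubound (S m)) as [C [h2 [HC [Hh2 [Hh21 HU]]]]].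
  set (h3 := eps * c / (4 * (K * C + 1))).
  assert (Hh3 : 0 < h3). { unfold h3. apply Rdiv_lt_0_compat. nra. nra. }
  set (hh := Rmin h (Rmin h2 h3)).
  assert (Hhh : 0 < hh) by (unfold hh; repeat apply Rmin_glb_lt; auto).
  assert (hh1 : hh <= h) by apply Rmin_l.
  assert (hh2 : hh <= h2) by (unfold hh; eapply Rle_trans; [apply Rmin_r| apply Rmin_l]).
  assert (hh3 : hh <= h3) by (unfold hh; eapply Rle_trans; [apply Rmin_r| apply Rmin_r]).
  assert (HINR : 0 < INR (S m)) by (apply lt_0_INR; lia).
  exists (eps * c / 2 / INR (S m)), hh. split. apply Rdiv_lt_0_compat; auto. nra. split; auto.
  assert (Integ : forall i sig, (i < n)%nat -> (sig = 1 \/ sig = -1) -> u i = 0 ->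
     (forall y, t0 <= y <= t0 + hh -> eps * c / 2 * (y - t0) ^ m <= sig * tri3 n (B y) (z y) i) ->
     forall s, t0 <= s <= t0 + hh -> eps * c / 2 / INR (S m) * (s - t0) ^ S m <= sig * z s i).
  { intros i sig Hi Hs Hui Hd s Hss.
    apply (lower_int (fun y => sig * z y i) (fun y => sig * tri3 n (B y) (z y) i) t0 hh
      (eps * c / 2) m); auto; try lra.
    intros y _. apply derivable_pt_lim_scal. apply zder; auto.
    rewrite Hui; ring. }
  assert (Own : forall i y, (i < n)%nat -> (S m <= Dm i)%nat -> t0 <= y <= t0 + hh ->
     Rabs (z y i) <= C * ((y - t0) ^ m * (y - t0))).
  { intros i y Hi HD Hy. rewrite <- (Rmult_comm (y - t0)). change ((y - t0) * (y - t0) ^ m) with ((y - t0) ^ S m).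
    apply HU; auto; lra. }
  assert (Pos : forall y, t0 <= y -> 0 <= (y - t0) ^ m) by (intros; apply pow_le; lra).
  assert (sgnc : forall r, sgn r = 1 \/ sgn r = -1) by apply sgn_cases.
  intros i Hi s Hs. split; [|split].
  -
    intros H1 H2.
    destruct (Lnb n u Hnz i m Hi H1 ltac:(lia)) as [Hi1 [Hui [ELp Hdisj]]].
    apply Integ; auto. intros y Hy.
    assert (HN : c * (y - t0) ^ m <= sgn (u (Lp u i)) * z y (i - 1)%nat).
    { destruct Hdisj as [[Z [Em El]]|[Z [D1 D2]]].
      - subst m. rewrite <- ELp. destruct (HL (i-1)%nat ltac:(lia) y ltac:(lra)) as [_ [_ H3]].
        apply H3. apply DL_nz; auto. apply DR_nz; auto; lia.
        rewrite Lp_nz, Rp_nz by (auto; lia). apply Rsqr_pos_lt in Z; exact Z.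
      - rewrite <- ELp. destruct (HL (i-1)%nat ltac:(lia) y ltac:(lra)) as [H3 _]. apply H3; auto. }
    eapply Rle_trans; [|apply (tri3_L n (B y) (z y) i K (C * ((y - t0) ^ m * (y - t0))) eps
                              (c * (y - t0) ^ m)); auto].
    1: apply q_bound; auto; try lra; [apply Pos; lra| unfold h3 in hh3; lra].
    all: try solve [lia | lra | (apply Rmult_le_pos; [lra| apply Rmult_le_pos; [apply Pos; lra| lra]]) |
       (apply Rmult_le_pos; [lra| apply Pos; lra]) | (apply offL; auto; lia) | (apply offR; auto) |
       (pose proof (offR y i ltac:(lia)); lra) | (intros; apply Hb; auto) | (apply Own; auto; unfold Dm; lia)].
    intro. apply Own; auto. destruct (farR n u i ltac:(lia) ltac:(lia)). unfold Dm; lia.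
  -
    intros H1 H2.
    destruct (Rnb n u Hnz i m Hi H1 ltac:(lia)) as [Hi1 [Hui [ERp Hdisj]]].
    apply Integ; auto. intros y Hy.
    assert (HN : c * (y - t0) ^ m <= sgn (u (Rp n u i)) * z y (i + 1)%nat).
    { destruct Hdisj as [[Z [Em El]]|[Z [D1 D2]]].
      - subst m. rewrite <- ERp. destruct (HL (i+1)%nat ltac:(lia) y ltac:(lra)) as [_ [_ H3]].
        rewrite (Rp_nz n u (i+1)) by (auto; lia). rewrite <- (Lp_nz u (i+1)) at 1 by auto.
        apply H3. apply DL_nz; auto. apply DR_nz; auto; lia.
        rewrite Lp_nz, Rp_nz by (auto; lia). apply Rsqr_pos_lt in Z; exact Z.
      - rewrite <- ERp. destruct (HL (i+1)%nat ltac:(lia) y ltac:(lra)) as [_ [H3 _]]. apply H3; auto. }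
    eapply Rle_trans; [|apply (tri3_R n (B y) (z y) i K (C * ((y - t0) ^ m * (y - t0))) eps
                              (c * (y - t0) ^ m)); auto].
    1: apply q_bound; auto; try lra; [apply Pos; lra| unfold h3 in hh3; lra].
    all: try solve [lia | lra | (apply Rmult_le_pos; [lra| apply Rmult_le_pos; [apply Pos; lra| lra]]) |
       (apply Rmult_le_pos; [lra| apply Pos; lra]) | (apply offL; auto; lia) | (apply offR; auto) |
       (pose proof (offR y i ltac:(lia)); lra) | (intros; apply Hb; auto) | (apply Own; auto; unfold Dm; lia)].
    intro. apply Own; auto; try lia. destruct (farL n u i ltac:(lia) Hi ltac:(lia)). unfold Dm; lia.
  -
    intros H1 H2 H3.
    destruct (Lnb n u Hnz i m Hi H1 ltac:(lia)) as [Hi1 [Hui [ELp Hdisj]]].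
    destruct (Rnb n u Hnz i m Hi H2 ltac:(lia)) as [Hi2 [_ [ERp Hdisj2]]].
    assert (Esg : sgn (u (Rp n u i)) = sgn (u (Lp u i))) by (symmetry; apply sgn_same; auto).
    apply Integ; auto. intros y Hy.
    assert (HN : c * (y - t0) ^ m <= sgn (u (Lp u i)) * z y (i - 1)%nat).
    { destruct Hdisj as [[Z [Em El]]|[Z [D1 D2]]].
      - subst m. rewrite <- ELp. destruct (HL (i-1)%nat ltac:(lia) y ltac:(lra)) as [_ [_ H4]].
        apply H4. apply DL_nz; auto. apply DR_nz; auto; lia.
        rewrite Lp_nz, Rp_nz by (auto; lia). apply Rsqr_pos_lt in Z; exact Z.
      - rewrite <- ELp. destruct (HL (i-1)%nat ltac:(lia) y ltac:(lra)) as [H4 _]. apply H4; auto. }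
    assert (HN2 : c * (y - t0) ^ m <= sgn (u (Rp n u i)) * z y (i + 1)%nat).
    { destruct Hdisj2 as [[Z [Em El]]|[Z [D1 D2]]].
      - subst m. rewrite <- ERp. destruct (HL (i+1)%nat ltac:(lia) y ltac:(lra)) as [_ [_ H4]].
        rewrite (Rp_nz n u (i+1)) by (auto; lia). rewrite <- (Lp_nz u (i+1)) at 1 by auto.
        apply H4. apply DL_nz; auto. apply DR_nz; auto; lia.
        rewrite Lp_nz, Rp_nz by (auto; lia). apply Rsqr_pos_lt in Z; exact Z.
      - rewrite <- ERp. destruct (HL (i+1)%nat ltac:(lia) y ltac:(lra)) as [_ [H4 _]]. apply H4; auto. }
    rewrite Esg in HN2.
    assert (0 <= c * (y - t0) ^ m) by (apply Rmult_le_pos; [lra| apply Pos; lra]).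
    eapply Rle_trans; [|apply (tri3_LR n (B y) (z y) i K (C * ((y - t0) ^ m * (y - t0))) eps
                              (c * (y - t0) ^ m)); auto].
    1: apply q_bound; auto; try lra; [apply Pos; lra| unfold h3 in hh3; lra].
    all: try solve [lia | lra | (apply Rmult_le_pos; [lra| apply Rmult_le_pos; [apply Pos; lra| lra]]) |
       (apply Rmult_le_pos; [lra| apply Pos; lra]) | (apply offL; auto; lia) | (apply offR; auto) |
       (pose proof (offR y i ltac:(lia)); lra) | (intros; apply Hb; auto) | (apply Own; auto; unfold Dm; lia)].
Qed.

Lemma Lbound m : exists c h, 0 < c /\ 0 < h /\ LoP m c h.
Proof.
  induction m. apply Lbase.
  destruct IHm as [c [h [Hc [Hh HL]]]]. apply (Lstep m c h); auto.
Qed.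

Lemma FL_F2 : exists d, 0 < d /\ forall s, t0 < s <= t0 + d -> F2 n u (z s).
Proof.
  destruct (fin_delta (S n) (fun m d => exists c, 0 < c /\ LoP m c d)) as [d [Hd Hdd]].
  - intros m d d' Hd' [c [Hc H]]. exists c; split; auto. eapply LoP_mono; eauto.
  - intros m _. destruct (Lbound m) as [c [h [Hc [Hh H]]]]. exists h; split; auto. exists c; auto.
  - exists d. split; auto. intros s Hs i Hi.
    assert (Pp : forall m, 0 < (s - t0) ^ m) by (intro; apply pow_lt; lra).
    pose proof (DL_le' n u i Hi) as Q1. pose proof (DR_le' n u i Hi) as Q2.
    split; [|split].
    + intro H. destruct (Hdd (DL n u i) ltac:(lia)) as [c [Hc HL]].
      destruct (HL i Hi s ltac:(lra)) as [H1 _]. specialize (H1 eq_refl H).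
      destruct (DL_lt_has n u i Hi ltac:(lia)) as [Hu _].
      apply sgn_prod; auto. pose proof (Pp (DL n u i)). nra.
    + intro H. destruct (Hdd (DR n u i) ltac:(lia)) as [c [Hc HL]].
      destruct (HL i Hi s ltac:(lra)) as [_ [H1 _]]. specialize (H1 eq_refl H).
      destruct (DR_lt_has n u i ltac:(lia)) as [Hr _].
      apply sgn_prod; auto. apply Rp_nz_val; auto. pose proof (Pp (DR n u i)). nra.
    + intros H Hp.
      assert (Hu : u (Lp u i) <> 0) by (intro E; rewrite E in Hp; lra).
      assert (HLn : (DL n u i < n)%nat).
      { unfold DL, hasL. destruct Req_EM_T. contradiction. pose proof (Lp_le u i). lia. }
      destruct (Hdd (DL n u i) ltac:(lia)) as [c [Hc HL]].
      destruct (HL i Hi s ltac:(lra)) as [_ [_ H1]]. specialize (H1 eq_refl (eq_sym H) Hp).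
      apply sgn_prod; auto. pose proof (Pp (DL n u i)). nra.
Qed.

Lemma FL_local : exists d, 0 < d /\ forall s, t0 < s <= t0 + d ->
  forall k, WAlt n (z s) k -> Alt n (z t0) k.
Proof.
  destruct FL_F2 as [d [Hd H]]. exists d. split; auto. intros s Hs k HW.
  apply (FL_comb n u (z s) k); auto.
Qed.
End Local.

Lemma pow_m1_abs k : Rabs ((-1) ^ k) = 1.
Proof. rewrite <- RPow_abs. replace (Rabs (-1)) with 1. apply pow1. unfold Rabs; destruct Rcase_abs; lra. Qed.

Lemma pow_m1_odd i : (-1) ^ (i + (i + 1)) = -1.
Proof. rewrite pow_add, pow_add, <- Rmult_assoc, pow_m1_sq. simpl. ring. Qed.

Section BL.
Variables (n : nat) (A : R -> nat -> nat -> R) (x : R -> nat -> R) (K eps t0 : R).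
Hypothesis Htri : tri n A.
Hypothesis HK : 0 <= K.
Hypothesis Hb : forall t i j, (i < n)%nat -> (j < n)%nat -> Rabs (A t i j) <= K.
Hypothesis Heps : 0 < eps.
Hypothesis Hoff : forall t i, (i + 1 < n)%nat -> eps <= A t i (i + 1)%nat /\ eps <= A t (i + 1)%nat i.
Hypothesis Hsol : is_solution n A x.
Hypothesis Hnz : exists j, (j < n)%nat /\ x t0 j <> 0.

Definition zt (tau : R) (i : nat) : R := (-1) ^ i * x (t0 - tau) i.
Definition Bt (tau : R) (i j : nat) : R := - ((-1) ^ (i + j)) * A (t0 - tau) i j.

Lemma Bt_sol : is_solution n Bt zt.
Proof.
  intros tau i Hi.
  assert (E : matvec n (Bt tau) (zt tau) i = (-1) ^ i * (matvec n (A (t0 - tau)) (x (t0 - tau)) i * -1)).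
  { unfold matvec, Bt, zt.
    match goal with |- _ = (-1) ^ i * (sumR n ?f * -1) =>
      replace ((-1) ^ i * (sumR n f * -1)) with (((-1) ^ i * -1) * sumR n f) by ring end.
    rewrite <- sumR_scal. apply sumR_ext.
    intros j Hj. rewrite pow_add.
    replace (- ((-1) ^ i * (-1) ^ j) * A (t0 - tau) i j * ((-1) ^ j * x (t0 - tau) j)) with
      (- ((-1) ^ i * ((-1) ^ j * (-1) ^ j)) * A (t0 - tau) i j * x (t0 - tau) j) by ring.
    rewrite pow_m1_sq. ring. }
  rewrite E. unfold zt. apply derivable_pt_lim_scal.
  apply (derivable_pt_lim_comp (fun s => t0 - s) (fun s => x s i)).
  - replace (-1) with (0 - 1) by ring. apply derivable_pt_lim_minus.
    apply derivable_pt_lim_const. apply derivable_pt_lim_id.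
  - apply Hsol; auto.
Qed.

Lemma Bt_tri : tri n Bt.
Proof. intros t i j Hi Hj H. unfold Bt. rewrite Htri; auto. ring. Qed.
Lemma Bt_bnd : forall t i j, (i < n)%nat -> (j < n)%nat -> Rabs (Bt t i j) <= K.
Proof. intros. unfold Bt. rewrite Rabs_mult, Rabs_Ropp, pow_m1_abs, Rmult_1_l. auto. Qed.
Lemma Bt_off : forall t i, (i + 1 < n)%nat -> eps <= Bt t i (i + 1)%nat /\ eps <= Bt t (i + 1)%nat i.
Proof.
  intros t i H. unfold Bt. rewrite pow_m1_odd.
  replace (i + 1 + i)%nat with (i + (i + 1))%nat by lia. rewrite pow_m1_odd.
  destruct (Hoff (t0 - t) i H). split; lra.
Qed.

Lemma zt_nz : exists j, (j < n)%nat /\ zt 0 j <> 0.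
Proof.
  destruct Hnz as [j [Hj H]]. exists j. split; auto. unfold zt. rewrite Rminus_0_r.
  intro E. apply Rmult_integral in E as [E|E]; auto.
  apply (pow_nonzero (-1) j); auto; lra.
Qed.

Lemma BL_local : exists d, 0 < d /\ forall s, t0 - d <= s < t0 ->
  forall k, WAlt n (x t0) k -> Alt n (x s) k.
Proof.
  destruct (FL_local n Bt zt K eps 0 Bt_tri HK Bt_bnd Heps Bt_off Bt_sol zt_nz) as [d [Hd H]].
  exists d. split; auto. intros s Hs k HW.
  assert (Hn : (1 <= n)%nat) by (destruct Hnz as [j [Hj _]]; lia).
  assert (Hk : (k <= n)%nat).
  { destruct HW as [c [_ Hc]]. pose proof (chg_le n c). lia. }
  apply notWAlt_D_Alt; auto. intro HW2.
  apply (WAlt_notAlt_D n (x t0) k Hn HW).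
  apply (Alt_ext n (zt 0)). intros j Hj. unfold zt, Dv. rewrite Rminus_0_r. auto.
  apply (H (t0 - s) ltac:(lra)).
  apply (WAlt_ext n (Dv (x s))). intros j Hj. unfold zt, Dv. replace (t0 - (t0 - s)) with s by ring. auto.
  auto.
Qed.
End BL.

Section Global.
Variables (n : nat) (A : R -> nat -> nat -> R) (x : R -> nat -> R) (K eps : R).
Hypothesis Htri : tri n A.
Hypothesis HK : 0 <= K.
Hypothesis Hb : forall t i j, (i < n)%nat -> (j < n)%nat -> Rabs (A t i j) <= K.
Hypothesis Heps : 0 < eps.
Hypothesis Hoff : forall t i, (i + 1 < n)%nat -> eps <= A t i (i + 1)%nat /\ eps <= A t (i + 1)%nat i.
Hypothesis Hsol : is_solution n A x.
Hypothesis Hnz : forall t, exists j, (j < n)%nat /\ x t j <> 0.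

Lemma Alt_time_open t k : Alt n (x t) k -> exists eta, 0 < eta /\ forall s, Rabs (s - t) < eta -> Alt n (x s) k.
Proof.
  intro H. destruct (Alt_open n (x t) k H) as [e [He Ho]].
  destruct (fin_delta n (fun i d => forall s, Rabs (s - t) < d -> Rabs (x s i - x t i) < e)) as [d [Hd Hdd]].
  - intros i d d' Hd' Hp s Hs. apply Hp; lra.
  - intros i Hi. apply (cont_of_deriv _ _ _ (Hsol t i Hi)); auto.
  - exists d. split; [auto|]. intros s Hs. apply Ho. intros j Hj. apply Hdd; auto.
Qed.

Lemma FL_at t0 : exists d, 0 < d /\ forall s, t0 < s <= t0 + d ->
  forall k, WAlt n (x s) k -> Alt n (x t0) k.
Proof. apply (FL_local n A x K eps t0); auto. Qed.

Lemma BL_at t0 : exists d, 0 < d /\ forall s, t0 - d <= s < t0 ->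
  forall k, WAlt n (x t0) k -> Alt n (x s) k.
Proof. apply (BL_local n A x K eps t0); auto. Qed.

Lemma Alt_back k t1 t2 : t1 <= t2 -> Alt n (x t2) k -> Alt n (x t1) k.
Proof.
  intros H12 H2. apply NNPP; intro N1.
  set (E := fun s => t1 <= s <= t2 /\ ~ Alt n (x s) k).
  assert (Eb : bound E) by (exists t2; intros s [Hs _]; lra).
  assert (Ene : exists s, E s) by (exists t1; split; auto; lra).
  destruct (completeness E Eb Ene) as [m [Hub Hl]].
  assert (Hm1 : t1 <= m) by (apply Hub; split; auto; lra).
  assert (Hm2 : m <= t2) by (apply Hl; intros s [Hs _]; lra).
  destruct (classic (Alt n (x m) k)) as [Am|Am].
  - destruct (Alt_time_open m k Am) as [eta [He Ho]].
    assert (Hex : exists s, E s /\ m - eta / 2 < s).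
    { apply NNPP; intro N. assert (m <= m - eta / 2).
      { apply Hl. intros s Es. apply Rnot_lt_le. intro. apply N. exists s; auto. }
      lra. }
    destruct Hex as [s [[Hs Ns] Hs2]]. apply Ns. apply Ho.
    assert (s <= m) by (apply Hub; split; auto).
    unfold Rabs; destruct Rcase_abs; lra.
  - destruct (Req_dec m t2) as [Em|Em]. subst m; contradiction.
    destruct (FL_at m) as [d [Hd Hf]].
    set (w := Rmin d (t2 - m)).
    assert (Hw : 0 < w) by (apply Rmin_glb_lt; lra).
    assert (Hw1 : w <= d) by apply Rmin_l. assert (Hw2 : w <= t2 - m) by apply Rmin_r.
    assert (Es : E (m + w / 2)).
    { split. lra. intro A2. apply Am. apply (Hf (m + w / 2)). lra. apply Alt_WAlt; auto. }
    pose proof (Hub _ Es). lra.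
Qed.
End Global.

Lemma Rdiv_le_0_compat a b : 0 <= a -> 0 < b -> 0 <= a / b.
Proof. intros. unfold Rdiv. apply Rmult_le_pos; auto. left; apply Rinv_0_lt_compat; auto. Qed.

Lemma sumR_minus k f g : sumR k f - sumR k g = sumR k (fun j => f j - g j).
Proof. induction k; simpl; [ring| rewrite <- IHk; ring]. Qed.

Lemma diff_bound n (M1 M2 : nat -> nat -> R) (y z : nat -> R) K e : 0 <= K -> 0 <= e ->
  (forall i j, (i < n)%nat -> (j < n)%nat -> Rabs (M2 i j) <= K) ->
  (forall i j, (i < n)%nat -> (j < n)%nat -> Rabs (M1 i j - M2 i j) <= e) ->
  Rabs (sumR n (fun i => 2 * ((y i - z i) * (matvec n M1 y i - matvec n M2 z i)))) <=
  (2 * K * INR n + e * INR n) * nsq n (fun i => y i - z i) + e * INR n * nsq n y.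
Proof.
  intros HK He H2 H12.
  set (d := fun i => y i - z i).
  assert (E : sumR n (fun i => 2 * ((y i - z i) * (matvec n M1 y i - matvec n M2 z i))) =
    2 * sumR n (fun i => d i * sumR n (fun j => M2 i j * d j)) +
    2 * sumR n (fun i => d i * sumR n (fun j => (M1 i j - M2 i j) * y j))).
  { rewrite <- !sumR_scal, <- sumR_plus. apply sumR_ext. intros i Hi. unfold matvec.
    rewrite sumR_minus.
    replace (sumR n (fun j => M1 i j * y j - M2 i j * z j)) with
      (sumR n (fun j => M2 i j * d j) + sumR n (fun j => (M1 i j - M2 i j) * y j)).
    unfold d; ring. rewrite <- sumR_plus. apply sumR_ext. intros; unfold d; ring. }
  rewrite E.
  pose proof (bilin n M2 K d d HK H2).
  pose proof (bilin n (fun i j => M1 i j - M2 i j) e d y He H12).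
  fold d. pose proof (nsq_nonneg n d). pose proof (nsq_nonneg n y). pose proof (pos_INR n).
  eapply Rle_trans. apply Rabs_triang. rewrite !Rabs_mult, Rabs_pos_eq by lra.
  assert (K * INR n * (nsq n d + nsq n d) / 2 = K * INR n * nsq n d) by field.
  assert (e * INR n * (nsq n d + nsq n y) / 2 <= e * INR n * nsq n d + e * INR n * nsq n y).
  { assert (0 <= e * INR n) by nra. nra. }
  nra.
Qed.

Lemma nsq_cv n (a : nat -> nat -> R) b : (forall i, (i < n)%nat -> Un_cv (fun m => a m i) (b i)) ->
  Un_cv (fun m => nsq n (fun i => a m i - b i)) 0.
Proof.
  induction n; intro H.
  - intros e He. exists 0%nat. intros m _. unfold nsq; simpl. unfold R_dist. rewrite Rminus_0_r, Rabs_R0; auto.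
  - unfold nsq; simpl. replace 0 with (0 + 0 * 0) by ring.
    apply CV_plus. apply IHn; intros; apply H; lia.
    assert (C : Un_cv (fun m => a m n - b n) 0).
    { replace 0 with (b n - b n) by ring. apply CV_minus. apply H; lia.
      intros e He. exists 0%nat. intros. unfold R_dist. rewrite Rminus_diag, Rabs_R0; auto. }
    apply CV_mult; auto.
Qed.

Lemma nsq_le2 n a b : nsq n a <= 2 * nsq n (fun i => a i - b i) + 2 * nsq n b.
Proof.
  unfold nsq. rewrite <- !sumR_scal, <- sumR_plus. apply sumR_le. intros j _.
  pose proof (Rle_0_sqr (a j - 2 * b j)); unfold Rsqr in *; nra.
Qed.

Lemma deriv_shift (f : R -> R) l c s : derivable_pt_lim f (s + c) l -> derivable_pt_lim (fun y => f (y + c)) s l.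
Proof.
  intro H. replace l with (l * 1) by ring.
  apply (derivable_pt_lim_comp (fun y => y + c) f). replace 1 with (1 + 0) by ring.
  apply derivable_pt_lim_plus. apply derivable_pt_lim_id. apply derivable_pt_lim_const. auto.
Qed.

Section ContDep.
Variables (n : nat) (A Astar : R -> nat -> nat -> R) (x xstar : R -> nat -> R) (tk : nat -> R) (xs : nat -> R) (K : R).
Hypothesis HK : 0 <= K.
Hypothesis Hb : forall t i j, (i < n)%nat -> (j < n)%nat -> Rabs (A t i j) <= K.
Hypothesis HbS : forall t i j, (i < n)%nat -> (j < n)%nat -> Rabs (Astar t i j) <= K.
Hypothesis Hsol : is_solution n A x.
Hypothesis HsolS : is_solution n Astar xstar.
Hypothesis Hcv : forall i, (i < n)%nat -> Un_cv (fun m => x (tk m) i) (xs i).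
Hypothesis Hx0 : forall i, (i < n)%nat -> xstar 0 i = xs i.
Hypothesis Hunif : forall a b e, 0 < e -> exists N : nat, forall k, (N <= k)%nat ->
     forall t i j, a <= t <= b -> (i < n)%nat -> (j < n)%nat ->
       Rabs (A (t + tk k) i j - Astar t i j) < e.

Definition ym (m : nat) (s : R) (i : nat) : R := x (s + tk m) i.
Definition Wm (m : nat) (s : R) : R := nsq n (fun i => ym m s i - xstar s i).

Lemma ym_sol m : is_solution n (fun s => A (s + tk m)) (ym m).
Proof. intros s i Hi. unfold ym. apply (deriv_shift (fun y => x y i)). apply Hsol; auto. Qed.

Lemma W_deriv m s : derivable_pt_lim (Wm m) s
  (sumR n (fun i => 2 * ((ym m s i - xstar s i) *
     (matvec n (A (s + tk m)) (ym m s) i - matvec n (Astar s) (xstar s) i)))).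
Proof.
  unfold Wm, nsq. apply (deriv_sumR n (fun i s => (ym m s i - xstar s i) * (ym m s i - xstar s i))).
  intros i Hi.
  set (dd := matvec n (A (s + tk m)) (ym m s) i - matvec n (Astar s) (xstar s) i).
  replace (2 * ((ym m s i - xstar s i) * dd)) with (dd * (ym m s i - xstar s i) + (ym m s i - xstar s i) * dd) by ring.
  apply (derivable_pt_lim_mult (fun s => ym m s i - xstar s i) (fun s => ym m s i - xstar s i));
  apply (derivable_pt_lim_minus (fun s => ym m s i) (fun s => xstar s i)); auto using ym_sol.
  all: try apply (ym_sol m s i Hi). all: apply HsolS; auto.
Qed.

Lemma cont_dep t : forall i, (i < n)%nat -> Un_cv (fun m => x (t + tk m) i) (xstar t i).
Proof.
  intros i Hi ep Hep.
  set (T := Rabs t).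
  set (c := 2 * K * INR n + INR n + 1).
  assert (Hc : 0 < c) by (unfold c; pose proof (pos_INR n); nra).
  set (G := exp (c * T)).
  assert (HG : 0 < G) by apply exp_pos.
  set (Q := 2 + 2 * nsq n xs).
  assert (HQ : 0 < Q) by (unfold Q; pose proof (nsq_nonneg n xs); lra).
  set (Ymax := Q * exp (cE n K * T)).
  assert (HY : 0 < Ymax) by (unfold Ymax; pose proof (exp_pos (cE n K * T)); nra).
  set (e := Rmin 1 (c * (ep * ep) / (4 * G * (INR n * Ymax + 1)))).
  assert (Hnp : 0 <= INR n) by apply pos_INR.
  assert (HnY : 0 <= INR n * Ymax) by (apply Rmult_le_pos; lra).
  assert (Hep2 : 0 < ep * ep) by (apply Rmult_lt_0_compat; lra).
  assert (He : 0 < e).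
  { unfold e. apply Rmin_glb_lt. lra. apply Rdiv_lt_0_compat. apply Rmult_lt_0_compat; lra.
    apply Rmult_lt_0_compat; lra. }
  assert (He1 : e <= 1) by apply Rmin_l.
  assert (He2 : e <= c * (ep * ep) / (4 * G * (INR n * Ymax + 1))) by apply Rmin_r.
  destruct (Hunif (- T) T e He) as [N1 HN1].
  pose proof (nsq_cv n (fun m i => x (tk m) i) xs Hcv) as Hw0.
  destruct (Hw0 (Rmin 1 (ep * ep / (2 * G)))) as [N2 HN2].
  { unfold Rgt. apply Rmin_glb_lt. lra. apply Rdiv_lt_0_compat; lra. }
  exists (Nat.max N1 N2). intros m Hm.
  specialize (HN2 m ltac:(lia)). unfold R_dist in HN2. rewrite Rminus_0_r in HN2.
  assert (W0 : Wm m 0 = nsq n (fun i => x (tk m) i - xs i)).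
  { unfold Wm, nsq. apply sumR_ext. intros j Hj. unfold ym. rewrite Rplus_0_l, Hx0; auto. }
  pose proof (nsq_nonneg n (fun i => x (tk m) i - xs i)).
  rewrite Rabs_pos_eq in HN2 by auto.
  assert (W0a : Wm m 0 < 1) by (rewrite W0; eapply Rlt_le_trans; [exact HN2| apply Rmin_l]).
  assert (W0b : Wm m 0 < ep * ep / (2 * G)) by (rewrite W0; eapply Rlt_le_trans; [exact HN2| apply Rmin_r]).
  assert (Y0 : nsq n (ym m 0) <= Q).
  { pose proof (nsq_le2 n (ym m 0) xs). unfold Q.
    assert (nsq n (fun i => ym m 0 i - xs i) = Wm m 0).
    { unfold Wm, nsq. apply sumR_ext. intros j Hj. rewrite Hx0; auto. }
    lra. }
  assert (Ybnd : forall s, - T <= s <= T -> nsq n (ym m s) <= Ymax).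
  { intros s Hs. unfold Ymax.
    assert (Hb' : forall t i j, (i < n)%nat -> (j < n)%nat -> Rabs (A (t + tk m) i j) <= K) by auto.
    destruct (Rle_dec 0 s).
    - pose proof (energy_up n _ _ K HK Hb' (ym_sol m) 0 s r).
      assert (exp (cE n K * (s - 0)) <= exp (cE n K * T)) by (apply exp_le; pose proof (cE_pos n K HK); nra).
      pose proof (exp_pos (cE n K * (s - 0))). pose proof (nsq_nonneg n (ym m 0)). nra.
    - pose proof (energy_down n _ _ K HK Hb' (ym_sol m) s 0 ltac:(lra)).
      assert (exp (cE n K * (0 - s)) <= exp (cE n K * T)) by (apply exp_le; pose proof (cE_pos n K HK); nra).
      pose proof (exp_pos (cE n K * (0 - s))). pose proof (nsq_nonneg n (ym m 0)). nra. }
  set (eta := e * INR n * Ymax).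
  assert (Heta : 0 <= eta) by (unfold eta; apply Rmult_le_pos; nra).
  assert (Dbnd : forall s, - T <= s <= T ->
     Rabs (sumR n (fun i => 2 * ((ym m s i - xstar s i) *
       (matvec n (A (s + tk m)) (ym m s) i - matvec n (Astar s) (xstar s) i)))) <= c * Wm m s + eta).
  { intros s Hs. eapply Rle_trans.
    apply (diff_bound n (A (s + tk m)) (Astar s) (ym m s) (xstar s) K e HK ltac:(lra));
      [intros; apply HbS; auto| intros; left; apply HN1; auto; lia].
    pose proof (nsq_nonneg n (fun i => ym m s i - xstar s i)). fold (Wm m s).
    pose proof (Ybnd s Hs). unfold c, eta.
    assert (e * INR n * nsq n (ym m s) <= e * INR n * Ymax) by (apply Rmult_le_compat_l; nra).
    assert ((2 * K * INR n + e * INR n) * Wm m s <= (2 * K * INR n + INR n + 1) * Wm m s).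
    { apply Rmult_le_compat_r; auto. nra. }
    lra. }
  assert (Wt : Wm m t + eta / c <= (Wm m 0 + eta / c) * G).
  { destruct (Rle_dec 0 t).
    - assert (Tt : T = t) by (unfold T; apply Rabs_pos_eq; auto).
      pose proof (gron_fwd (Wm m) _ c eta 0 t r Hc (fun s _ => W_deriv m s)) as Gr.
      rewrite Rminus_0_r in Gr. unfold G. rewrite Tt. apply Gr.
      intros s Hs. pose proof (Dbnd s ltac:(lra)). revert H0; unfold Rabs; destruct Rcase_abs; intros; lra.
    - assert (Tt : T = - t) by (unfold T; apply Rabs_left; lra).
      pose proof (gron_bwd (Wm m) _ c eta t 0 ltac:(lra) Hc (fun s _ => W_deriv m s)) as Gr.
      replace (0 - t) with (- t) in Gr by ring. unfold G. rewrite Tt. apply Gr.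
      intros s Hs. pose proof (Dbnd s ltac:(lra)). revert H0; unfold Rabs; destruct Rcase_abs; intros; lra. }
  assert (Ee : eta / c <= ep * ep / (4 * G)).
  { unfold eta. apply Rmult_le_compat_r with (r := INR n * Ymax / c) in He2.
    2: { apply Rdiv_le_0_compat; nra. }
    eapply Rle_trans. replace (e * INR n * Ymax / c) with (e * (INR n * Ymax / c)) by (field; lra).
    exact He2.
    replace (c * (ep * ep) / (4 * G * (INR n * Ymax + 1)) * (INR n * Ymax / c)) with
      (ep * ep / (4 * G) * (INR n * Ymax / (INR n * Ymax + 1))) by (field; nra).
    assert (INR n * Ymax / (INR n * Ymax + 1) <= 1).
    { apply Rmult_le_reg_r with (INR n * Ymax + 1). nra. unfold Rdiv. rewrite Rmult_assoc, Rinv_l by nra. nra. }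
    assert (0 <= ep * ep / (4 * G)) by (apply Rdiv_le_0_compat; nra). nra. }
  assert (WtB : Wm m t < ep * ep).
  { assert (0 <= eta / c) by (apply Rdiv_le_0_compat; lra).
    assert (HH : (Wm m 0 + eta / c) * G < (ep * ep / (2 * G) + ep * ep / (4 * G)) * G) by
      (apply Rmult_lt_compat_r; auto; lra).
    replace ((ep * ep / (2 * G) + ep * ep / (4 * G)) * G) with (3 / 4 * (ep * ep)) in HH by (field; lra).
    assert (0 < ep * ep) by nra. lra. }
  unfold R_dist. unfold Wm, ym in WtB.
  pose proof (nsq_ge n (fun i => x (t + tk m) i - xstar t i) i Hi). cbv beta in H0.
  set (dd := x (t + tk m) i - xstar t i) in *.
  assert (Hd2 : dd * dd < ep * ep) by lra.
  assert (Hab : Rabs dd * Rabs dd = dd * dd) by (rewrite <- Rabs_mult; apply Rabs_pos_eq; nra).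
  destruct (Rlt_or_le (Rabs dd) ep); auto. exfalso. pose proof (Rabs_pos dd). nra.
Qed.
End ContDep.

Lemma approx_le b U : (forall e, 0 < e -> exists a, a <= U /\ Rabs (a - b) < e) -> b <= U.
Proof.
  intros H. apply Rnot_lt_le; intro Hl. destruct (H (b - U)) as [a [Ha Hab]]; [lra|].
  revert Hab; unfold Rabs; destruct Rcase_abs; intros; lra.
Qed.
Lemma approx_ge b L : (forall e, 0 < e -> exists a, L <= a /\ Rabs (a - b) < e) -> L <= b.
Proof.
  intros H. apply Rnot_lt_le; intro Hl. destruct (H (L - b)) as [a [Ha Hab]]; [lra|].
  revert Hab; unfold Rabs; destruct Rcase_abs; intros; lra.
Qed.
Lemma approx_zero b : (forall e, 0 < e -> Rabs b < e) -> b = 0.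
Proof.
  intro H. destruct (Req_dec b 0); auto. exfalso. pose proof (Rabs_pos_lt b H0).
  specialize (H (Rabs b) H1). lra.
Qed.

Lemma sig_iff n v : in_Lambda n v -> (forall k, WAlt n v k -> Alt n v k) ->
  forall k, (k <= sigma_var n v)%nat <-> Alt n v k.
Proof.
  intros HL HW k. destruct (Lambda_sigma n v HL) as [Hc Hchg]. split.
  - intro Hk. apply HW. exists (cL v). split; auto. lia.
  - intro HA. specialize (HA _ Hc). lia.
Qed.

Theorem lemma2p5
  (n : nat) (A : R -> nat -> nat -> R) (eps0 : R)
  (x : R -> nat -> R) (tk : nat -> R) (xs : nat -> R)
  (Astar : R -> nat -> nat -> R) (xstar : R -> nat -> R) :
  (* tridiagonal *)
  (forall t i j, (i < n)%nat -> (j < n)%nat -> (i + 1 < j \/ j + 1 < i)%nat ->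
     A t i j = 0) ->
  (* bounded entries *)
  (exists M, forall t i j, (i < n)%nat -> (j < n)%nat -> Rabs (A t i j) <= M) ->
  (* uniformly continuous entries *)
  (forall i j, (i < n)%nat -> (j < n)%nat ->
     forall eps, 0 < eps -> exists delta, 0 < delta /\
       forall s t, Rabs (s - t) < delta -> Rabs (A s i j - A t i j) < eps) ->
  (* off-diagonal lower bound *)
  0 < eps0 ->
  (forall t i, (i + 1 < n)%nat -> eps0 <= A t i (i + 1)%nat /\ eps0 <= A t (i + 1)%nat i) ->
  (* x is a nontrivial solution of x' = A(t) x *)
  is_solution n A x ->
  (exists t i, (i < n)%nat /\ x t i <> 0) ->
  (* t_k -> +oo or t_k -> -oo *)
  (cv_infty tk \/ cv_infty (fun k => - tk k)) ->
  (* x(t_k) -> x_* <> 0 *)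
  (forall i, (i < n)%nat -> Un_cv (fun k => x (tk k) i) (xs i)) ->
  (exists i, (i < n)%nat /\ xs i <> 0) ->
  (* A(. + t_k) -> A_* uniformly on compact intervals *)
  (forall a b eps, 0 < eps -> exists N : nat, forall k, (N <= k)%nat ->
     forall t i j, a <= t <= b -> (i < n)%nat -> (j < n)%nat ->
       Rabs (A (t + tk k) i j - Astar t i j) < eps) ->
  (* x_*(t) solves x' = A_*(t) x with x_*(0) = x_* *)
  is_solution n Astar xstar ->
  (forall i, (i < n)%nat -> xstar 0 i = xs i) ->
  (forall t, in_Lambda n (xstar t)) /\
  (exists c : nat, forall t, sigma_var n (xstar t) = c).
Proof.
  intros Htri0 [M HM] _ Heps0 Hoff0 Hsol Hnzx Hinf Hcv [i0 [Hi0 Hxs]] Hunif HsolS Hx0.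
  assert (Hn : (1 <= n)%nat) by lia.
  assert (HM0 : 0 <= M).
  { pose proof (HM 0 0%nat 0%nat ltac:(lia) ltac:(lia)). pose proof (Rabs_pos (A 0 0%nat 0%nat)). lra. }
  assert (Htri : tri n A) by exact Htri0.
  assert (Happ : forall t i j, (i < n)%nat -> (j < n)%nat -> forall e, 0 < e ->
     exists N, Rabs (A (t + tk N) i j - Astar t i j) < e).
  { intros t i j Hi Hj e He. destruct (Hunif t t e He) as [N HN]. exists N. apply (HN N); auto; lra. }
  assert (HtriS : tri n Astar).
  { intros t i j Hi Hj H. apply approx_zero. intros e He. destruct (Happ t i j Hi Hj e He) as [N HN].
    rewrite Htri0 in HN; auto. rewrite Rminus_0_l, Rabs_Ropp in HN; auto. }
  assert (HbS : forall t i j, (i < n)%nat -> (j < n)%nat -> Rabs (Astar t i j) <= M).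
  { intros t i j Hi Hj. apply approx_le. intros e He. destruct (Happ t i j Hi Hj e He) as [N HN].
    exists (Rabs (A (t + tk N) i j)). split. apply HM; auto.
    eapply Rle_lt_trans. apply Rabs_triang_inv2. auto. }
  assert (HoffS : forall t i, (i + 1 < n)%nat -> eps0 <= Astar t i (i + 1)%nat /\ eps0 <= Astar t (i + 1)%nat i).
  { intros t i Hi. split; apply approx_ge; intros e He.
    - destruct (Happ t i (i+1)%nat ltac:(lia) Hi e He) as [N HN].
      exists (A (t + tk N) i (i + 1)%nat). split; auto. apply Hoff0; auto.
    - destruct (Happ t (i+1)%nat i Hi ltac:(lia) e He) as [N HN].
      exists (A (t + tk N) (i + 1)%nat i). split; auto. apply Hoff0; auto. }
  assert (Hnzall : forall t, exists j, (j < n)%nat /\ x t j <> 0).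
  { destruct Hnzx as [ts [is [His Hx]]]. intro t. apply nz_of_nsq.
    apply (energy_pos n A x M HM0 HM Hsol ts). apply nsq_pos_of; eauto. }
  assert (Hnzs : forall t, exists j, (j < n)%nat /\ xstar t j <> 0).
  { intro t. apply nz_of_nsq.
    apply (energy_pos n Astar xstar M HM0 HbS HsolS 0). apply nsq_pos_of. exists i0. rewrite Hx0; auto. }
  pose proof (cont_dep n A Astar x xstar tk xs M HM0 HM HbS Hsol HsolS Hcv Hx0 Hunif) as Hcd.
  pose proof (Alt_back n A x M eps0 Htri HM0 HM Heps0 Hoff0 Hsol Hnzall) as AB.
  pose proof (FL_at n Astar xstar M eps0 HtriS HM0 HbS Heps0 HoffS HsolS Hnzs) as FLs.
  pose proof (BL_at n Astar xstar M eps0 HtriS HM0 HbS Heps0 HoffS HsolS Hnzs) as BLs.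
  set (good := fun k => forall t, exists N, forall m, (N <= m)%nat -> Alt n (x (t + tk m)) k).
  assert (C1 : forall k t0, Alt n (xstar t0) k -> good k).
  { intros k t0 HA t. destruct (Alt_open n (xstar t0) k HA) as [eta [Heta Ho]].
    destruct (fin_N n (fun i N => forall m, (N <= m)%nat -> Rabs (x (t0 + tk m) i - xstar t0 i) < eta))
      as [N0 HN0].
    - intros i N N' HNN' H m Hm. apply H; lia.
    - intros i Hi. destruct (Hcd t0 i Hi eta Heta) as [N HN]. exists N. intros m Hm. apply HN; lia.
    - assert (HA0 : forall m, (N0 <= m)%nat -> Alt n (x (t0 + tk m)) k).
      { intros m Hm. apply Ho. intros j Hj. apply HN0; auto. }
      destruct Hinf as [Hp|Hmi].
      + exists 0%nat. intros m _. destruct (Hp (t + tk m - t0)) as [N1 HN1].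
        specialize (HN1 (Nat.max N0 N1) ltac:(lia)).
        apply (AB k (t + tk m) (t0 + tk (Nat.max N0 N1))). lra. apply HA0; lia.
      + destruct (Hmi (t - t0 - tk N0)) as [N1 HN1]. exists N1. intros m Hm.
        specialize (HN1 m Hm). apply (AB k (t + tk m) (t0 + tk N0)). lra. apply HA0; lia. }
  assert (C2 : forall k, good k -> forall t, WAlt n (xstar t) k).
  { intros k Hg t. apply (WAlt_closed n (fun m => x (t + tk m)) (xstar t) k).
    - intro M0. destruct (Hg t) as [N HN]. exists (Nat.max M0 N). split. lia. apply Alt_WAlt. apply HN; lia.
    - intros j Hj. apply Hcd; auto. }
  assert (C3 : forall k, good k -> forall t, Alt n (xstar t) k).
  { intros k Hg t. destruct (FLs t) as [d [Hd Hf]]. apply (Hf (t + d)). lra. apply C2; auto. }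
  assert (C4 : forall k t, WAlt n (xstar t) k -> good k).
  { intros k t HW. destruct (BLs t) as [d [Hd Hb]]. apply (C1 k (t - d)). apply (Hb (t - d)); auto; lra. }
  assert (HWA : forall t k, WAlt n (xstar t) k -> Alt n (xstar t) k).
  { intros t k HW. apply (C3 k (C4 k t HW)). }
  assert (HL : forall t, in_Lambda n (xstar t)).
  { intro t. apply Lambda_of; auto. apply chg_unique. apply HWA. }
  split; auto.
  exists (sigma_var n (xstar 0)). intro t.
  assert (Eq : forall k, Alt n (xstar t) k <-> Alt n (xstar 0) k).
  { intro k. split; intro H. apply (C3 k (C1 k t H)). apply (C3 k (C1 k 0 H)). }
  apply Nat.le_antisymm.
  - apply (sig_iff n (xstar 0) (HL 0) (HWA 0)). apply Eq.
    apply (sig_iff n (xstar t) (HL t) (HWA t)). lia.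
  - apply (sig_iff n (xstar t) (HL t) (HWA t)). apply Eq.
    apply (sig_iff n (xstar 0) (HL 0) (HWA 0)). lia.
Qed.
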